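(* Let $c_i,\alpha_j\in\mathbb Z$. The Riordan array $$(g,f)=\Bigl(1+\sum_{i\ge1}c_it^i,\ t\bigl(1+\alpha_1t+\alpha_2t^2+\cdots+\alpha_6t^6+O(t^7)\bigr)\Bigr)\in S\mathcal R(\mathbb Z)$$ belongs to $[S\mathcal R(\mathbb Z),S\mathcal R(\mathbb Z)]$ if and only if $c_1=0$, $\alpha_1=\alpha_2=0$, and $\alpha_3\equiv\alpha_4\equiv\alpha_6\pmod 2$. In particular, $$S\mathcal R(\mathbb Z)^{ab}\cong\mathbb Z^3\times(\mathbb Z_2)^2.$$
   Context: $S\mathcal R(\mathbb Z)$ is the group of Riordan arrays $(g,f)$ with $g=1+\sum_{i\ge1}c_it^i$, $f=t+\sum_{k\ge2}f_kt^k$ in $\mathbb Z[[t]]$, identified with lower triangular matrices $(d_{n,k})$, $d_{n,k}=[t^n]gf^k$, with product $(g_1,f_1)(g_2,f_2)=(g_1\cdot(g_2\circ f_1),\,f_2\circ f_1)$. Here $[S\mathcal R(\mathbb Z),S\mathcal R(\mathbb Z)]$ denotes the topological commutator subgroup: the set of limits of finite products of commutators $x^{-1}y^{-1}xy$, in the topology of formal power series ($t$-adic, coefficientwise convergence: a sequence converges if for each $n$ its coefficients of $t^0,\dots,t^n$ in both components eventually agree with those of the limit); $S\mathcal R(\mathbb Z)^{ab}$ is the quotient by this subgroup. $\mathbb Z_2=\mathbb Z/2\mathbb Z$. *)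

(* Defs.v *)
From mathcomp Require Import all_boot all_order all_algebra.
Set Implicit Arguments. Unset Strict Implicit. Unset Printing Implicit Defensive.
Import GRing.Theory Num.Theory.
Local Open Scope ring_scope.

(* formal power series in Z[[t]] : n |-> [t^n] *)
Definition series := nat -> int.

Definition delta0 : series := fun n => if n == 0%N then 1 else 0.
Definition tX : series := fun n => if n == 1%N then 1 else 0.

Definition smul (a b : series) : series :=
  fun n => \sum_(i < n.+1) a i * b (n - i)%N.

Fixpoint spow (f : series) (k : nat) : series :=
  if k is k'.+1 then smul f (spow f k') else delta0.

(* composition g o f, for f with f 0 = 0 : [t^n] g(f) = sum_{k<=n} g_k [t^n] f^k *)
Definition scomp (g f : series) : series :=
  fun n => \sum_(k < n.+1) g k * spow f k n.

Definition riordan := (series * series)%type.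

Definition isSR (x : riordan) : Prop :=
  x.1 0%N = 1 /\ x.2 0%N = 0 /\ x.2 1%N = 1.

Definition rmul (x y : riordan) : riordan :=
  (smul x.1 (scomp y.1 x.2), scomp y.2 x.2).

Definition rid : riordan := (delta0, tX).

(* z is a commutator x^-1 y^-1 x y with x, y in SR(Z);
   equivalently (in the group) y x z = x y *)
Definition is_commutator (z : riordan) : Prop :=
  isSR z /\ exists x y, isSR x /\ isSR y /\
    (forall n, (rmul (rmul y x) z).1 n = (rmul x y).1 n /\
               (rmul (rmul y x) z).2 n = (rmul x y).2 n).

Inductive prod_comm : riordan -> Prop :=
| pc_id : prod_comm rid
| pc_mul w z : prod_comm w -> is_commutator z -> prod_comm (rmul w z).

(* topological commutator subgroup: limits (coefficientwise) of finite
   products of commutators *)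
Definition in_top_commutator (x : riordan) : Prop :=
  forall N : nat, exists w, prod_comm w /\
    forall n, (n <= N)%N -> x.1 n = w.1 n /\ x.2 n = w.2 n.

(* Main.v *)
Require Import Defs.
From mathcomp Require Import all_boot all_order all_algebra.
From mathcomp Require Import ring zify.
Import GRing.Theory Num.Theory.
Local Open Scope ring_scope.
Arguments spow : simpl never.
Arguments smul : simpl never.
Arguments scomp : simpl never.

Lemma spowS (f : series) k n : spow f k.+1 n = \sum_(i < n.+1) f i * spow f k (n - i)%N.
Proof. reflexivity. Qed.
Lemma spow0 (f : series) n : spow f 0 n = delta0 n.
Proof. reflexivity. Qed.
Lemma smulE (a b : series) n : smul a b n = \sum_(i < n.+1) a i * b (n - i)%N.
Proof. reflexivity. Qed.
Lemma scompE (g f : series) n : scomp g f n = \sum_(k < n.+1) g k * spow f k n.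
Proof. reflexivity. Qed.

Lemma spow_lt (f : series) k n : f 0%N = 0 -> (n < k)%N -> spow f k n = 0.
Proof.
move=> f0; elim: k n => [//|k IH] n ltnk.
rewrite spowS big1 // => i _.
case: i => [[|i]] /= Hi; first by rewrite f0 mul0r.
rewrite IH ?mulr0 //; lia.
Qed.

Lemma spow_nn (f : series) n : f 0%N = 0 -> f 1%N = 1 -> spow f n n = 1.
Proof.
move=> f0 f1; elim: n => [|n IH]; first by rewrite spow0.
rewrite spowS (bigD1 (Ordinal (isT : (1 < n.+2)%N))) //= f1 subSS subn0 IH mul1r.
rewrite big1 ?addr0 // => [[[|[|i]]]] Hi //= _; first by rewrite f0 mul0r.
rewrite spow_lt ?mulr0 //; lia.
Qed.

Lemma spow1 (f : series) n : spow f 1 n = f n.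
Proof.
rewrite spowS (bigD1 (Ordinal (ltnSn n))) //= subnn spow0 /delta0 /= mulr1.
rewrite big1 ?addr0 // => [[i Hi]] /= Hne.
rewrite spow0 /delta0; case: eqP => [|]; last by rewrite mulr0.
move=> H; have Ei : i = n by lia.
by move: Hne; rewrite -val_eqE /= Ei eqxx.
Qed.

Lemma smul_delta0l (a : series) n : smul delta0 a n = a n.
Proof.
rewrite smulE big_ord_recl /= subn0 /delta0 /= mul1r big1 ?addr0 // => i _.
by rewrite /= mul0r.
Qed.

Lemma smul_delta0r (a : series) n : smul a delta0 n = a n.
Proof.
rewrite smulE (bigD1 (Ordinal (ltnSn n))) //= subnn /delta0 /= mulr1.
rewrite big1 ?addr0 // => [[i Hi]] /= Hne.
case: eqP => [|]; last by rewrite mulr0.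
move=> H; have Ei : i = n by lia.
by move: Hne; rewrite -val_eqE /= Ei eqxx.
Qed.

Lemma scomp_delta0 (f : series) n : scomp delta0 f n = delta0 n.
Proof.
rewrite scompE big_ord_recl /= spow0 /delta0 /= mul1r big1 ?addr0 // => i _.
by rewrite /= mul0r.
Qed.

Lemma scomp_tXl (f : series) n : f 0%N = 0 -> scomp tX f n = f n.
Proof.
move=> f0; case: n => [|n].
  by rewrite scompE big_ord_recl big_ord0 /tX /= mul0r addr0 f0.
rewrite scompE big_ord_recl /= mul0r add0r big_ord_recl /= spow1 /tX /= mul1r.
by rewrite big1 ?addr0 // => i _; rewrite /= mul0r.
Qed.

Lemma spow_tX k n : spow tX k n = if n == k then 1 else 0.
Proof.
elim: k n => [|k IH] n; first by rewrite spow0.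
rewrite spowS; case: n => [|n].
  by rewrite big_ord_recl big_ord0 /tX /= mul0r addr0.
rewrite big_ord_recl /= /tX /= mul0r add0r big_ord_recl /= mul1r subn1 /= IH.
rewrite big1 ?addr0 // => i _; by rewrite /= mul0r.
Qed.

Lemma scomp_tXr (a : series) n : scomp a tX n = a n.
Proof.
rewrite scompE (bigD1 (Ordinal (ltnSn n))) //= spow_tX eqxx mulr1.
rewrite big1 ?addr0 // => [[i Hi]] /= Hne.
rewrite spow_tX; case: eqP => [H|]; last by rewrite mulr0.
have Ei : i = n by lia.
by move: Hne; rewrite -val_eqE /= Ei eqxx.
Qed.

Set Implicit Arguments. Unset Strict Implicit.

Definition cgr n (p q : {poly int}) := forall i, (i < n)%N -> p`_i = q`_i.

Lemma cgrP n p q : cgr n p q <-> exists r, p - q = 'X^n * r.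
Proof.
split=> [H|[r Hr] i Hi].
  exists (\poly_(i < size (p - q)) (p - q)`_(i + n)).
  apply/polyP => i; rewrite coefXnM coef_poly.
  case: ltnP => Hi; first by rewrite coefB H // subrr.
  rewrite subnK //; case: ltnP => // Hs.
  by rewrite nth_default //; apply: leq_trans Hs (leq_subr _ _).
apply/eqP; rewrite -subr_eq0 -coefB Hr coefXnM Hi //.
Qed.

Lemma cgr_refl n p : cgr n p p. Proof. by []. Qed.
Lemma cgr_sym n p q : cgr n p q -> cgr n q p.
Proof. by move=> H i Hi; rewrite H. Qed.
Lemma cgr_trans n p q r : cgr n p q -> cgr n q r -> cgr n p r.
Proof. by move=> H1 H2 i Hi; rewrite H1 ?H2. Qed.
Lemma cgr_le m n p q : (m <= n)%N -> cgr n p q -> cgr m p q.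
Proof. move=> Hmn H i Hi; apply: H; lia. Qed.
Lemma cgr_add n p p' q q' : cgr n p p' -> cgr n q q' -> cgr n (p + q) (p' + q').
Proof. by move=> H1 H2 i Hi; rewrite !coefD H1 ?H2. Qed.
Lemma cgr_opp n p p' : cgr n p p' -> cgr n (- p) (- p').
Proof. by move=> H1 i Hi; rewrite !coefN H1. Qed.
Lemma cgr_scale n c p p' : cgr n p p' -> cgr n (c *: p) (c *: p').
Proof. by move=> H1 i Hi; rewrite !coefZ H1. Qed.

Lemma cgr_mul n p p' q q' : cgr n p p' -> cgr n q q' -> cgr n (p * q) (p' * q').
Proof.
move=> /cgrP [r1 H1] /cgrP [r2 H2]; apply/cgrP.
exists (r1 * q + p' * r2).
have -> : p * q - p' * q' = (p - p') * q + p' * (q - q') by ring.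
by rewrite H1 H2; ring.
Qed.

Lemma cgr_exp n p p' k : cgr n p p' -> cgr n (p ^+ k) (p' ^+ k).
Proof.
move=> H; elim: k => [|k IH]; first by rewrite !expr0.
by rewrite !exprS; apply: cgr_mul.
Qed.

Lemma cgr_compl n (p p' q : {poly int}) : cgr n p p' -> q`_0 = 0 -> cgr n (p \Po q) (p' \Po q).
Proof.
move=> /cgrP [r Hr] q0; apply/cgrP.
have [q1 Hq1] : exists q1, q = 'X * q1.
  have : cgr 1 q 0 by move=> i; case: i => // _; rewrite q0 coef0.
  by move/cgrP => [q1]; rewrite subr0 expr1 => ->; exists q1.
exists (q1 ^+ n * (r \Po q)).
by rewrite -comp_polyB Hr comp_polyM comp_Xn_poly {1}Hq1 exprMn mulrA.
Qed.

Lemma cgr_compr n (p q q' : {poly int}) : cgr n q q' -> cgr n (p \Po q) (p \Po q').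
Proof.
move=> Hq; elim/poly_ind: p => [|p c IH]; first by rewrite !comp_poly0.
rewrite !comp_poly_MXaddC; apply: cgr_add => //.
exact: cgr_mul.
Qed.

Lemma cgr_comp n (p p' q q' : {poly int}) : cgr n p p' -> cgr n q q' -> q`_0 = 0 ->
  cgr n (p \Po q) (p' \Po q').
Proof.
move=> Hp Hq q0; eapply cgr_trans; [exact: (cgr_compl Hp q0)|exact: cgr_compr].
Qed.

Definition T n (a : series) : {poly int} := \poly_(i < n) a i.

Lemma coefT n a i : (T n a)`_i = if (i < n)%N then a i else 0.
Proof. by rewrite coef_poly. Qed.

Lemma cgrT n a b : cgr n (T n a) (T n b) <-> forall i, (i < n)%N -> a i = b i.
Proof.
split=> H i Hi; first by have := H i Hi; rewrite !coefT Hi.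
by rewrite !coefT Hi H.
Qed.

Lemma cgrT_l n a p : cgr n (T n a) p <-> forall i, (i < n)%N -> a i = p`_i.
Proof.
split=> H i Hi; first by have := H i Hi; rewrite !coefT Hi.
by rewrite !coefT Hi H.
Qed.

Lemma T_smul n a b : cgr n (T n (smul a b)) (T n a * T n b).
Proof.
apply/cgrT_l => i Hi; rewrite smulE coefM; apply: eq_bigr => [[j Hj]] _ /=.
rewrite !coefT; have -> : (j < n)%N by lia. have -> : (i - j < n)%N by lia. done.
Qed.

Lemma T_spow n f k : cgr n (T n (spow f k)) (T n f ^+ k).
Proof.
elim: k => [|k IH].
  apply/cgrT_l => i Hi; rewrite spow0 expr0 coef1 /delta0.
  by case: i {Hi}.
rewrite exprS; eapply cgr_trans; first exact: T_smul.
exact: cgr_mul.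
Qed.

Lemma T0 n a : a 0%N = 0 -> (T n a)`_0 = 0.
Proof. by move=> a0; rewrite coefT; case: ifP. Qed.

Lemma comp_sumX n (c : nat -> int) (q : {poly int}) :
  (\sum_(k < n) c k *: 'X^k) \Po q = \sum_(k < n) c k *: q ^+ k.
Proof.
elim: n => [|n IH]; first by rewrite !big_ord0 comp_poly0.
by rewrite !big_ord_recr /= comp_polyD IH comp_polyZ comp_Xn_poly.
Qed.

Lemma T_scomp n g f : f 0%N = 0 -> cgr n (T n (scomp g f)) (T n g \Po T n f).
Proof.
move=> f0; apply/cgrT_l => i Hi.
have -> : T n g \Po T n f = \sum_(k < n) g k *: (T n f) ^+ k.
  rewrite [T n g]/T poly_def; exact: comp_sumX.
rewrite coef_sum scompE.
have E : forall k, (g k *: T n f ^+ k)`_i = g k * spow f k i.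
  by move=> k; rewrite coefZ -(@T_spow n f k i Hi) coefT Hi.
rewrite [RHS](eq_bigr (fun k : 'I_n => g k * spow f k i)); last by move=> k _; exact: E.
rewrite -(big_mkord xpredT (fun k => g k * spow f k i)).
rewrite -(big_mkord xpredT (fun k => g k * spow f k i)).
rewrite [RHS](big_cat_nat (n := i.+1)) //=.
rewrite [X in _ = _ + X]big1_seq ?addr0 // => k /andP [_].
rewrite mem_iota => /andP [Hk _]; rewrite spow_lt ?mulr0 //.
Qed.

Lemma spow_k1 (f : series) k : f 0%N = 0 -> f 1%N = 1 -> spow f k k.+1 = k%:R * f 2%N.
Proof.
move=> f0 f1; elim: k => [|k IH]; first by rewrite spow0 /delta0 /=; ring.
rewrite spowS big_ord_recl /= f0 mul0r add0r.
rewrite big_ord_recl /= f1 mul1r subSS subn0 IH.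
rewrite big_ord_recl /= subSS subSS subn0 spow_nn // mulr1.
rewrite big1 ?addr0; first by rewrite mulrSr; ring.
move=> i _; rewrite /bump /= spow_lt ?mulr0 //; have := ltn_ord i; lia.
Qed.

Lemma spow_k2 (f : series) k : f 0%N = 0 -> f 1%N = 1 ->
  spow f k k.+2 = k%:R * f 3%N + 'C(k, 2)%:R * f 2%N ^+ 2.
Proof.
move=> f0 f1; elim: k => [|k IH]; first by rewrite spow0 bin0n /= !mul0r addr0.
rewrite spowS big_ord_recl /= f0 mul0r add0r.
rewrite big_ord_recl /= f1 mul1r subSS subn0 IH.
rewrite big_ord_recl /= subSS subSS subn0 spow_k1 //.
rewrite big_ord_recl /= subSS subSS subSS subn0 spow_nn // mulr1.
rewrite big1 ?addr0; last by move=> i _; rewrite /bump /= spow_lt ?mulr0 //; have := ltn_ord i; lia.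
rewrite binS bin1 natrD !mulrSr; ring.
Qed.

Lemma isSR_rmul x y : isSR x -> isSR y -> isSR (rmul x y).
Proof.
move: x y => [x1 x2] [y1 y2] [/= x10 [x20 x21]] [/= y10 [y20 y21]].
rewrite /isSR /rmul /=; split; last split.
- rewrite smulE big_ord_recl big_ord0 /= scompE big_ord_recl big_ord0 /=.
  by rewrite spow0 /delta0 /= x10 y10 !mulr1 addr0.
- by rewrite scompE big_ord_recl big_ord0 /= y20 mul0r addr0.
- rewrite scompE big_ord_recl big_ord_recl big_ord0 /= y20 y21 mul0r add0r.
  by rewrite spow1 x21 mul1r addr0.
Qed.

Lemma isSR_rid : isSR rid.
Proof. by []. Qed.

Definition ag n (x y : riordan) := forall i, (i < n)%N -> x.1 i = y.1 i /\ x.2 i = y.2 i.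

Lemma scomp_diff (z r f : series) m d : (forall k, (k < m)%N -> z k = r k) ->
  scomp z f d = scomp r f d + \sum_(m <= k < d.+1) (z k - r k) * spow f k d.
Proof.
move=> Hzr; rewrite !scompE.
have -> : \sum_(k < d.+1) z k * spow f k d =
   \sum_(k < d.+1) r k * spow f k d + \sum_(k < d.+1) (z k - r k) * spow f k d.
  by rewrite -big_split /=; apply: eq_bigr => k _; ring.
congr (_ + _); rewrite -(big_mkord xpredT (fun k => (z k - r k) * spow f k d)).
case: (leqP m d.+1) => Hm.
  rewrite (big_cat_nat (n := m)) //= big1_seq ?add0r // => k /andP [_].
  by rewrite mem_iota => /andP [_ Hk]; rewrite Hzr ?subrr ?mul0r //; lia.
rewrite big1_seq; last first.
  by move=> k /andP [_]; rewrite mem_iota => /andP [_ Hk]; rewrite Hzr ?subrr ?mul0r //; lia.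
rewrite big_geq //; lia.
Qed.

Lemma lev_f (u z : riordan) m d : isSR u -> (2 <= m)%N -> ag m z rid ->
  (rmul u z).2 d = u.2 d + \sum_(m <= k < d.+1) z.2 k * spow u.2 k d.
Proof.
case: u => [u1 u2] [/= u10 [u20 u21]] Hm Hz /=.
rewrite (@scomp_diff z.2 tX u2 m d); last by move=> k Hk; case: (Hz k Hk).
rewrite scomp_tXl //; congr (_ + _); rewrite !big_nat; apply: eq_bigr => k Hk.
by rewrite /tX; case: eqP => [?|]; [subst; lia | rewrite subr0].
Qed.

Lemma lev_g_aux (u2 z1 : series) m d : u2 0%N = 0 -> u2 1%N = 1 -> (1 <= m)%N ->
  (forall k, (k < m)%N -> z1 k = delta0 k) -> (d <= m)%N ->
  scomp z1 u2 d = delta0 d + (if d == m then z1 m else 0).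
Proof.
move=> u20 u21 Hm Hz Hd.
rewrite (@scomp_diff z1 delta0 u2 m d Hz) scomp_delta0; congr (_ + _).
case: eqP => [->|Hne].
  rewrite big_nat1 spow_nn // mulr1 /delta0; case: eqP => [?|]; [lia|by rewrite subr0].
by rewrite big_geq //; lia.
Qed.

Lemma lev_g (u z : riordan) m d : isSR u -> (1 <= m)%N -> ag m z rid -> (d <= m)%N ->
  (rmul u z).1 d = u.1 d + (if d == m then z.1 m else 0).
Proof.
case: u => [u1 u2] [/= u10 [u20 u21]] Hm Hz Hd /=.
rewrite smulE.
have E : forall i : 'I_d.+1, u1 i * scomp z.1 u2 (d - i)%N =
   u1 i * delta0 (d - i)%N + (if (i == 0%N :> nat) && (d == m) then u1 0%N * z.1 m else 0).
  move=> i; rewrite (@lev_g_aux u2 z.1 m) //; first last.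
  - by have := ltn_ord i; lia.
  - by move=> k Hk; case: (Hz k Hk).
  rewrite mulrDr; congr (_ + _).
  case: i => [[|i] Hi] /=; first by rewrite subn0; case: (d == m); rewrite ?mulr0.
  by case: eqP => [?|]; [lia|rewrite mulr0].
rewrite (eq_bigr _ (fun i _ => E i)) big_split /=.
rewrite -smulE smul_delta0r u10 mul1r; congr (_ + _).
by rewrite big_ord_recl /= big1 ?addr0.
Qed.

Fixpoint tab (F : nat -> (nat -> int) -> int) (d : nat) : seq int :=
  if d is d'.+1 then rcons (tab F d') (F d' (fun k => nth 0 (tab F d') k)) else [::].
Definition srec F : nat -> int := fun d => nth 0 (tab F d.+1) d.
Definition local (F : nat -> (nat -> int) -> int) :=
  forall d s s', (forall k, (k < d)%N -> s k = s' k) -> F d s = F d s'.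

Lemma size_tab F d : size (tab F d) = d.
Proof. by elim: d => //= d IH; rewrite size_rcons IH. Qed.

Lemma nth_tab F d k : (k < d)%N -> nth 0 (tab F d) k = srec F k.
Proof.
elim: d => // d IH Hk; rewrite /= nth_rcons size_tab.
case: ltnP => Hkd; first exact: IH.
have -> : k = d by lia.
by rewrite eqxx /srec /= nth_rcons size_tab ltnn eqxx.
Qed.

Lemma srecE F d : local F -> srec F d = F d (srec F).
Proof.
move=> HF; rewrite /srec /= nth_rcons size_tab ltnn eqxx.
apply: HF => k Hk; exact: nth_tab.
Qed.

Definition csolve (f h : series) : series :=
  srec (fun d s => h d - \sum_(k < d) s k * spow f k d).

Lemma csolveP f h d : f 0%N = 0 -> f 1%N = 1 -> scomp (csolve f h) f d = h d.
Proof.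
move=> f0 f1; rewrite scompE big_ord_recr /= spow_nn // mulr1.
rewrite {2}/csolve srecE; first by rewrite -/(csolve f h); ring.
move=> e s s' Hs; congr (_ - _); apply: eq_bigr => k _; rewrite Hs //.
Qed.

Lemma smul_rev (a b : series) d : smul a b d = \sum_(i < d.+1) a (d - i)%N * b i.
Proof.
rewrite smulE (reindex_inj rev_ord_inj) /=; apply: eq_bigr => i _.
by rewrite subKn // -ltnS.
Qed.

Definition msolve (a h : series) : series :=
  srec (fun d s => h d - \sum_(i < d) a (d - i)%N * s i).

Lemma msolveP a h d : a 0%N = 1 -> smul a (msolve a h) d = h d.
Proof.
move=> a0; rewrite smul_rev big_ord_recr /= subnn a0 mul1r.
rewrite {2}/msolve srecE; first by rewrite -/(msolve a h); ring.
move=> e s s' Hs; congr (_ - _); apply: eq_bigr => k _; rewrite Hs //.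
Qed.

Lemma smul_eq (a b b' : series) d : (forall k, b k = b' k) -> smul a b d = smul a b' d.
Proof. by move=> H; rewrite !smulE; apply: eq_bigr => i _; rewrite H. Qed.

Lemma scomp_eq (g g' f : series) d : (forall k, g k = g' k) -> scomp g f d = scomp g' f d.
Proof. by move=> H; rewrite !scompE; apply: eq_bigr => i _; rewrite H. Qed.

Lemma solve_ex (u v : riordan) : isSR u -> isSR v ->
  exists z, isSR z /\ forall d, (rmul u z).1 d = v.1 d /\ (rmul u z).2 d = v.2 d.
Proof.
case: u => [u1 u2] [/= u10 [u20 u21]]; case: v => [v1 v2] [/= v10 [v20 v21]].
set b := msolve u1 v1.
exists (csolve u2 b, csolve u2 v2).
have E1 : forall d, smul u1 (scomp (csolve u2 b) u2) d = v1 d.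
  move=> d; rewrite (@smul_eq _ _ b); first exact: msolveP.
  by move=> k; rewrite csolveP.
have E2 : forall d, scomp (csolve u2 v2) u2 d = v2 d by move=> d; rewrite csolveP.
split; last by move=> d; split; [exact: E1|exact: E2].
rewrite /isSR /=; split; last split.
- have := csolveP b 0 u20 u21; rewrite scompE big_ord_recl big_ord0 spow0 /= mulr1 addr0 => ->.
  rewrite /b; have := msolveP v1 0 u10; rewrite smulE big_ord_recl big_ord0 /= subn0 u10 mul1r addr0 => ->.
  exact: v10.
- have := E2 0%N; rewrite scompE big_ord_recl big_ord0 spow0 /= mulr1 addr0 => ->.
  exact: v20.
- have := E2 1%N; rewrite scompE big_ord_recl big_ord_recl big_ord0 /= spow1 u21 mulr1 addr0.
  have := E2 0%N; rewrite scompE big_ord_recl big_ord0 spow0 /= mulr1 addr0 => ->.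
  by rewrite v20 mul0r add0r => ->.
Qed.

Lemma comm_ex (x y : riordan) : isSR x -> isSR y ->
  exists z, is_commutator z /\
   forall d, (rmul (rmul y x) z).1 d = (rmul x y).1 d /\ (rmul (rmul y x) z).2 d = (rmul x y).2 d.
Proof.
move=> Hx Hy.
have [z [Hz Hzd]] := solve_ex (isSR_rmul Hy Hx) (isSR_rmul Hx Hy).
exists z; split => //; split => //; exists x, y; split => //.
Qed.

Lemma lev_f_lt (u z : riordan) m d : isSR u -> (2 <= m)%N -> ag m z rid -> (d < m)%N ->
  (rmul u z).2 d = u.2 d.
Proof. by move=> Hu Hm Hz Hd; rewrite (lev_f d Hu Hm Hz) big_geq ?addr0. Qed.

Lemma lev_f_eq (u z : riordan) m : isSR u -> (2 <= m)%N -> ag m z rid ->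
  (rmul u z).2 m = u.2 m + z.2 m.
Proof.
move=> Hu Hm Hz; rewrite (lev_f m Hu Hm Hz) big_nat1 spow_nn ?mulr1 //; by case: Hu => _ [].
Qed.

Lemma lev_f_1 (u z : riordan) m : isSR u -> (2 <= m)%N -> ag m z rid ->
  (rmul u z).2 m.+1 = u.2 m.+1 + z.2 m * (m%:R * u.2 2%N) + z.2 m.+1.
Proof.
move=> Hu Hm Hz; case: (Hu) => _ [u20 u21].
rewrite (lev_f m.+1 Hu Hm Hz) big_nat_recl; last by lia.
rewrite big_nat1 spow_k1 // spow_nn //; ring.
Qed.

Lemma lev_f_2 (u z : riordan) m : isSR u -> (2 <= m)%N -> ag m z rid ->
  (rmul u z).2 m.+2 = u.2 m.+2 + z.2 m * (m%:R * u.2 3%N + 'C(m, 2)%:R * u.2 2%N ^+ 2)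
     + z.2 m.+1 * (m.+1%:R * u.2 2%N) + z.2 m.+2.
Proof.
move=> Hu Hm Hz; case: (Hu) => _ [u20 u21].
rewrite (lev_f m.+2 Hu Hm Hz) big_nat_recl; last by lia.
rewrite big_nat_recl; last by lia.
rewrite big_nat1 spow_k2 // spow_k1 // spow_nn //; ring.
Qed.

Lemma lev_g_lt (u z : riordan) m d : isSR u -> (1 <= m)%N -> ag m z rid -> (d < m)%N ->
  (rmul u z).1 d = u.1 d.
Proof.
move=> Hu Hm Hz Hd; rewrite (lev_g Hu Hm Hz (ltnW Hd)).
by case: eqP => [?|]; [lia|rewrite addr0].
Qed.

Lemma lev_g_eq (u z : riordan) m : isSR u -> (1 <= m)%N -> ag m z rid ->
  (rmul u z).1 m = u.1 m + z.1 m.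
Proof. by move=> Hu Hm Hz; rewrite (lev_g Hu Hm Hz (leqnn m)) eqxx. Qed.

Lemma ag_mul (u z : riordan) m : isSR u -> (2 <= m)%N -> ag m z rid -> ag m (rmul u z) u.
Proof.
move=> Hu Hm Hz i Hi; split; [apply: lev_g_lt Hu _ Hz Hi; lia | exact: lev_f_lt Hu Hm Hz Hi].
Qed.

Definition gtriv (x : riordan) := forall d, x.1 d = delta0 d.

Lemma gtriv_mul_g (u z : riordan) d : gtriv z -> (rmul u z).1 d = u.1 d.
Proof.
move=> Hz; rewrite /rmul /= (@smul_eq _ _ delta0) ?smul_delta0r //.
by move=> k; rewrite (@scomp_eq _ delta0) ?scomp_delta0.
Qed.

Lemma scomp_inj (z z' f : series) : f 0%N = 0 -> f 1%N = 1 ->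
  (forall d, scomp z f d = scomp z' f d) -> forall d, z d = z' d.
Proof.
move=> f0 f1 H d; elim/ltn_ind: d => d IH.
have := H d; rewrite !scompE !big_ord_recr /= spow_nn // !mulr1.
rewrite (eq_bigr (fun k : 'I_d => z' k * spow f k d)); last first.
  by move=> k _; rewrite IH.
by move/addrI.
Qed.

Lemma comm_lead (u v z : riordan) n : isSR u -> isSR v -> isSR z -> (2 <= n)%N ->
  (forall d, (rmul u z).1 d = v.1 d /\ (rmul u z).2 d = v.2 d) -> ag n u v ->
  [/\ ag n z rid, z.1 n = v.1 n - u.1 n & z.2 n = v.2 n - u.2 n].
Proof.
move=> Hu Hv Hz Hn Huz Huv.
have Hz0 : ag 1 z rid by move=> i; case: i => // _; case: Hz => -> [-> _].
have Hz1 : ag 2 z rid.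
  move=> i; case: i => [|[|i]] Hi //; first exact: Hz0.
  split; last by case: Hz => _ [].
  have E1 := lev_g_eq Hu (isT : (1 <= 1)%N) Hz0.
  have [E2 _] := Huz 1%N; have [E3 _] := Huv 1%N Hn.
  rewrite /rid /= /delta0 /=; lia.
have Hag : forall m, (2 <= m)%N -> (m <= n)%N -> ag m z rid.
  elim=> [//|m IH] Hm Hmn; case: (ltngtP m 1) => Hm1; [lia| |by subst].
  have IHm := IH Hm1 (ltnW Hmn).
  move=> i Hi; case: (ltngtP i m) => Him; first exact: IHm.
    lia.
  subst i; split.
    have E1 := lev_g_eq Hu (ltnW Hm1) IHm.
    have [E2 _] := Huz m; have [E3 _] := Huv m Hmn.
    rewrite /rid /= /delta0; case: eqP => [?|_]; [lia|lia].
  have E1 := lev_f_eq Hu Hm1 IHm.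
  have [_ E2] := Huz m; have [_ E3] := Huv m Hmn.
  rewrite /rid /= /tX; case: eqP => [?|_]; [lia|lia].
have Hn' := Hag n Hn (leqnn n); split => //.
  have E1 := lev_g_eq Hu (ltnW Hn) Hn'; have [E2 _] := Huz n; lia.
have E1 := lev_f_eq Hu Hn Hn'; have [_ E2] := Huz n; lia.
Qed.

Definition bin (i : nat) (a : int) : series :=
  fun d => if d == 1%N then 1 else if d == i.+1 then a else 0.

Lemma T_bin N i a : (1 <= i)%N -> (i.+1 < N)%N -> T N (bin i a) = 'X * (1 + a%:P * 'X^i).
Proof.
move=> Hi HN.
have -> : 'X * (1 + a%:P * 'X^i) = 'X + a *: 'X^(i.+1) :> {poly int}.
  by rewrite -mul_polyC exprS; ring.
apply/polyP => d; rewrite coefT coefD coefX coefZ coefXn /bin.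
case: (ltnP d N) => HdN.
  case: eqP => [->|H1].
    by case: eqP => [?|_] /=; [lia|rewrite mulr0 addr0].
  by case: eqP => [_|Hi1] /=; rewrite ?mulr1 ?mulr0 ?add0r ?addr0.
case: eqP => [?|_]; first lia.
by case: eqP => [?|_] /=; [lia| rewrite mulr0 add0r].
Qed.

Lemma binom3 (A Y : {poly int}) m :
  exists r, (1 + A * Y) ^+ m - (1 + m%:R * A * Y + 'C(m, 2)%:R * A ^+ 2 * Y ^+ 2) = Y ^+ 3 * r.
Proof.
elim: m => [|m [r Hr]]; first by exists 0; rewrite bin0n /=; ring.
exists ((1 + A * Y) * r + 'C(m, 2)%:R * A ^+ 3).
have E : (1 + A * Y) ^+ m = Y ^+ 3 * r + (1 + m%:R * A * Y + 'C(m, 2)%:R * A ^+ 2 * Y ^+ 2).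
  by rewrite -Hr; ring.
rewrite exprS E binS bin1 !natrD; ring.
Qed.

Lemma cgr_mulX k m p q : cgr k p q -> cgr (m + k) ('X^m * p) ('X^m * q).
Proof.
move=> /cgrP [r Hr]; apply/cgrP; exists r.
by rewrite -mulrBr Hr mulrA -exprD.
Qed.

Lemma spow_bin i a m d : (1 <= i)%N -> (d < m + 3 * i)%N ->
  spow (bin i a) m d = (d == m)%:R + (d == m + i)%N%:R * (m%:R * a)
     + (d == m + 2 * i)%N%:R * ('C(m, 2)%:R * a ^+ 2).
Proof.
move=> Hi Hd; set N := (m + 3 * i)%N.
have HN : (i.+1 < N)%N by rewrite /N; lia.
have := @T_spow N (bin i a) m d Hd; rewrite coefT Hd => ->.
rewrite T_bin // exprMn.
have [r Hr] := binom3 (a%:P) ('X^i) m.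
have Hc : cgr (3 * i) ((1 + a%:P * 'X^i) ^+ m)
   (1 + m%:R * a%:P * 'X^i + 'C(m, 2)%:R * a%:P ^+ 2 * 'X^i ^+ 2).
  by apply/cgrP; exists r; rewrite Hr -exprM mulnC.
rewrite (@cgr_mulX (3 * i) m _ _ Hc d Hd).
rewrite !mulrDr mulr1 !coefD coefXn.
rewrite -exprM -[m%:R]polyC_natr -polyCM -polyC_exp -[('C(m, 2))%:R]polyC_natr -polyCM.
rewrite !coefXnM !coefCM !coefXn.
case: (ltnP d m) => H.
  have -> : (d == m + i)%N = false by apply/eqP; lia.
  have -> : (d == m + 2 * i)%N = false by apply/eqP; lia.
  by rewrite /= !mul0r addr0.
have -> : (d - m == i)%N = (d == m + i)%N by apply/idP/idP => /eqP H'; apply/eqP; lia.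
have -> : (d - m == i * 2)%N = (d == m + 2 * i)%N by apply/idP/idP => /eqP H'; apply/eqP; lia.
ring.
Qed.

Lemma scomp_bin j b (f : series) d : (1 <= j)%N -> f 0%N = 0 ->
  scomp (bin j b) f d = f d + b * spow f j.+1 d.
Proof.
move=> Hj f0.
rewrite (@scomp_diff (bin j b) tX f j.+1 d); last first.
  move=> k Hk; rewrite /bin /tX; case: eqP => // _; case: eqP => // ?; lia.
rewrite scomp_tXl //; congr (_ + _).
case: (ltnP d j.+1) => Hd.
  by rewrite big_geq // spow_lt // mulr0.
rewrite big_ltn; last by lia.
rewrite big_nat big1 ?addr0; last first.
  move=> k /andP [Hk1 Hk2]; rewrite /bin /tX; case: eqP => [?|_]; first lia.
  by case: eqP => [?|_]; [lia| rewrite subrr mul0r].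
rewrite /bin /tX; case: eqP => [?|_]; first lia.
by rewrite eqxx subr0.
Qed.

Definition Fel (f : series) : riordan := (delta0, f).

Lemma Fel_g (f g : series) d : (rmul (Fel f) (Fel g)).1 d = delta0 d.
Proof.
rewrite /rmul /= smul_delta0l; exact: scomp_delta0.
Qed.

Lemma Fel_f (f g : series) d : (rmul (Fel f) (Fel g)).2 d = scomp g f d.
Proof. by []. Qed.

Lemma isSR_bin i a : (1 <= i)%N -> isSR (Fel (bin i a)).
Proof. move=> Hi; rewrite /isSR /bin /=; split => //; split => //. Qed.

Lemma smul_eql (a a' b : series) d : (forall k, a k = a' k) -> smul a b d = smul a' b d.
Proof. by move=> H; rewrite !smulE; apply: eq_bigr => i _; rewrite H. Qed.

Lemma comm_fel (f g : series) : isSR (Fel f) -> isSR (Fel g) ->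
  exists z, [/\ is_commutator z, gtriv z, isSR z &
    forall d, (rmul (rmul (Fel g) (Fel f)) z).2 d = (rmul (Fel f) (Fel g)).2 d].
Proof.
move=> Hf Hg; have [z [Hc Hz]] := comm_ex Hf Hg.
have HzSR : isSR z by case: Hc.
exists z; split => // [d|d]; last by case: (Hz d).
have H1 : forall d, scomp z.1 (rmul (Fel g) (Fel f)).2 d = scomp delta0 (rmul (Fel g) (Fel f)).2 d.
  move=> e; have [E _] := Hz e; rewrite Fel_g in E; rewrite scomp_delta0 -E /rmul /=.
  by rewrite (@smul_eql _ delta0 _ e (fun k => Fel_g g f k)) smul_delta0l.
apply: (scomp_inj _ _ H1).
- have := isSR_rmul Hg Hf; by case=> _ [].
- have := isSR_rmul Hg Hf; by case=> _ [].
Qed.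

Ltac dec := repeat match goal with
  |- context [(?x == ?y)%N] => case: (@eqP nat x y) => ?; try (exfalso; lia)
  end.

Lemma fam1 i j a b : (1 <= i)%N -> (i < j)%N ->
  exists z, [/\ is_commutator z, gtriv z, isSR z, ag (i + j).+1 z rid &
     z.2 (i + j).+1 = (j%:R - i%:R) * a * b /\
     ((3 <= i)%N -> z.2 (i + j).+2 = 0 /\ z.2 (i + j).+3 = 0)].
Proof.
move=> Hi Hij.
have Hj : (1 <= j)%N by lia.
have [z [Hc Hg HSR Hz]] := comm_fel (isSR_bin a Hi) (isSR_bin b Hj).
set u := rmul (Fel (bin j b)) (Fel (bin i a)).
set v := rmul (Fel (bin i a)) (Fel (bin j b)).
have Hu : isSR u by apply: isSR_rmul; apply: isSR_bin.
have Hv : isSR v by apply: isSR_rmul; apply: isSR_bin.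
have U : forall d, (d <= i + j + 3)%N -> u.2 d = bin j b d + a * (
   (d == i.+1)%:R + (d == i.+1 + j)%N%:R * (i.+1%:R * b)
     + (d == i.+1 + 2 * j)%N%:R * ('C(i.+1, 2)%:R * b ^+ 2)).
  move=> d Hd; rewrite /u Fel_f scomp_bin // ?spow_bin //; lia.
have V : forall d, (d < j.+1 + 3 * i)%N -> v.2 d = bin i a d + b * (
   (d == j.+1)%:R + (d == j.+1 + i)%N%:R * (j.+1%:R * a)
     + (d == j.+1 + 2 * i)%N%:R * ('C(j.+1, 2)%:R * a ^+ 2)).
  move=> d Hd; rewrite /v Fel_f scomp_bin // ?spow_bin //; lia.
have Huz : forall d, (rmul u z).1 d = v.1 d /\ (rmul u z).2 d = v.2 d.
  move=> d; split; last exact: Hz.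
  by rewrite gtriv_mul_g // /u /v !Fel_g.
have Huv : ag (i + j).+1 u v.
  move=> d Hd; split; first by rewrite /u /v !Fel_g.
  rewrite U ?V; try lia.
  rewrite /bin; dec; rewrite /=; ring.
have Hn : (2 <= (i + j).+1)%N by lia.
have [Hag Hz1 Hz2] := comm_lead Hu Hv HSR Hn Huz Huv.
exists z; split => //; split.
  rewrite Hz2 U ?V; try lia.
  rewrite /bin; dec; rewrite /=; ring.
move=> Hi3.
have u2 : u.2 2%N = 0 by rewrite U; [rewrite /bin; dec; rewrite /=; ring | lia].
have u3 : u.2 3%N = 0 by rewrite U; [rewrite /bin; dec; rewrite /=; ring | lia].
have E1 := lev_f_1 Hu Hn Hag; have E2 := lev_f_2 Hu Hn Hag.
rewrite u2 u3 in E1 E2.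
have [_ F1] := Huz (i + j).+2; have [_ F2] := Huz (i + j).+3.
have Z1 : z.2 (i + j).+2 = 0.
  move: E1; rewrite F1 U ?V; try lia.
  rewrite /bin; dec; rewrite /=; move=> E; lia.
split => //.
move: E2; rewrite F2 Z1 U ?V; try lia.
rewrite /bin; dec; rewrite /=; move=> E; lia.
Qed.

Definition g1s (c : int) : series := fun d => if d == 0%N then 1 else if d == 1%N then c else 0.

Lemma scomp_g1 c (f : series) d : f 0%N = 0 -> scomp (g1s c) f d = delta0 d + c * f d.
Proof.
move=> f0.
rewrite (@scomp_diff (g1s c) delta0 f 1 d); last by move=> k; case: k.
rewrite scomp_delta0; congr (_ + _).
case: d => [|d]; first by rewrite big_geq // f0 mulr0.
rewrite big_ltn // big_nat big1 ?addr0; last first.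
  move=> k /andP [Hk1 Hk2]; rewrite /g1s /delta0; case: eqP => [?|_]; first lia.
  by case: eqP => [?|_]; [lia|rewrite subrr mul0r].
by rewrite /g1s /delta0 /= spow1; ring.
Qed.

Lemma gfam k e : (1 <= k)%N ->
  exists z, [/\ is_commutator z, isSR z, ag k.+1 z rid, z.1 k.+1 = e & z.2 k.+1 = 0].
Proof.
move=> Hk.
have Hx : isSR (g1s (- e), tX) by [].
have Hy := isSR_bin 1 Hk.
have [z [Hc Hz]] := comm_ex Hx Hy.
have HSR : isSR z by case: Hc.
set u := rmul (Fel (bin k 1)) (g1s (- e), tX).
set v := rmul (g1s (- e), tX) (Fel (bin k 1)).
have Hu : isSR u by apply: isSR_rmul.
have Hv : isSR v by apply: isSR_rmul.
have U1 : forall d, u.1 d = delta0 d + (- e) * bin k 1 d.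
  by move=> d; rewrite /u /rmul /= smul_delta0l scomp_g1.
have U2 : forall d, u.2 d = bin k 1 d by move=> d; rewrite /u /rmul /= scomp_tXl.
have V1 : forall d, v.1 d = g1s (- e) d.
  move=> d; rewrite /v /rmul /= (@smul_eq _ _ delta0) ?smul_delta0r //.
  by move=> l; rewrite scomp_delta0.
have V2 : forall d, v.2 d = bin k 1 d by move=> d; rewrite /v /rmul /= scomp_tXr.
have Huv : ag k.+1 u v.
  move=> d Hd; rewrite U1 U2 V1 V2; split => //.
  rewrite /bin /g1s /delta0; dec; rewrite /=; ring.
have Hn : (2 <= k.+1)%N by lia.
have [Hag Hz1 Hz2] := comm_lead Hu Hv HSR Hn Hz Huv.
exists z; split => //.
  by rewrite Hz1 U1 V1 /bin /g1s /delta0; dec; rewrite /=; ring.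
by rewrite Hz2 U2 V2 subrr.
Qed.


Ltac solve_lin E := match type of E with _ = ?M + _ => apply: (@addrI _ M); rewrite -E; ring end.

Lemma fam2 j b : (3 <= j)%N ->
  exists z, [/\ is_commutator z, gtriv z, isSR z, ag j.+2 z rid &
     z.2 j.+2 = (j%:R - 1) * b /\
     z.2 j.+3 = b * ('C(j.+1, 2)%:R - (j%:R - 1) * j.+2%:R)].
Proof.
move=> Hj.
have Hj1 : (1 <= j)%N by lia.
have [z [Hc Hg HSR Hz]] := comm_fel (isSR_bin 1 (isT : (1 <= 1)%N)) (isSR_bin b Hj1).
set u := rmul (Fel (bin j b)) (Fel (bin 1 1)).
set v := rmul (Fel (bin 1 1)) (Fel (bin j b)).
have Hu : isSR u by apply: isSR_rmul; apply: isSR_bin.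
have Hv : isSR v by apply: isSR_rmul; apply: isSR_bin.
have U : forall d, (d <= j + 3)%N -> u.2 d = bin j b d + 1 * (
   (d == 2)%:R + (d == 2 + j)%N%:R * (2%:R * b)
     + (d == 2 + 2 * j)%N%:R * ('C(2, 2)%:R * b ^+ 2)).
  move=> d Hd; rewrite /u Fel_f scomp_bin // ?spow_bin //; lia.
have V : forall d, (d <= j + 3)%N -> v.2 d = bin 1 1 d + b * (
   (d == j.+1)%:R + (d == j.+1 + 1)%N%:R * (j.+1%:R * 1)
     + (d == j.+1 + 2 * 1)%N%:R * ('C(j.+1, 2)%:R * 1 ^+ 2)).
  move=> d Hd; rewrite /v Fel_f scomp_bin // ?spow_bin //; lia.
have Huz : forall d, (rmul u z).1 d = v.1 d /\ (rmul u z).2 d = v.2 d.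
  move=> d; split; last exact: Hz.
  by rewrite gtriv_mul_g // /u /v !Fel_g.
have Huv : ag j.+2 u v.
  move=> d Hd; split; first by rewrite /u /v !Fel_g.
  rewrite U ?V; try lia.
  rewrite /bin; dec; rewrite /=; ring.
have Hn : (2 <= j.+2)%N by lia.
have [Hag Hz1 Hz2] := comm_lead Hu Hv HSR Hn Huz Huv.
have Z2 : z.2 j.+2 = (j%:R - 1) * b.
  rewrite Hz2 U ?V; try lia.
  rewrite /bin; dec; rewrite /=; ring.
exists z; split => //; split => //.
have u2 : u.2 2%N = 1 by rewrite U; [rewrite /bin; dec; rewrite /=; ring | lia].
have E1 := lev_f_1 Hu Hn Hag.
rewrite u2 Z2 in E1.
have [_ F1] := Huz j.+3.
move: E1; rewrite F1 U ?V; try lia.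
rewrite /bin; dec; rewrite /=; move=> E.
apply/eqP; rewrite -subr_eq0; apply/eqP.
transitivity (- (0 + b * (0 + 0 * (j.+1%:R * 1) + 1 * ('C(j.+1, 2)%:R * 1 ^+ 2))
  - (0 + 1 * (0 + 0 * (2%:R * b) + 0 * ('C(2, 2)%:R * b ^+ 2)) +
     (j%:R - 1) * b * (j.+2%:R * 1) + z.2 j.+3))); first ring.
by rewrite E subrr oppr0.
Qed.

Lemma fam3 j b : (3 <= j)%N ->
  exists z, [/\ is_commutator z, gtriv z, isSR z, ag j.+3 z rid &
     [/\ z.2 j.+3 = (j%:R - 2%:R) * b, z.2 j.+4 = 0 &
     z.2 j.+3.+2 = b * ('C(j.+1, 2)%:R - (j%:R - 2%:R) * j.+3%:R)]].
Proof.
move=> Hj.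
have Hj1 : (1 <= j)%N by lia.
have [z [Hc Hg HSR Hz]] := comm_fel (isSR_bin 1 (isT : (1 <= 2)%N)) (isSR_bin b Hj1).
set u := rmul (Fel (bin j b)) (Fel (bin 2 1)).
set v := rmul (Fel (bin 2 1)) (Fel (bin j b)).
have Hu : isSR u by apply: isSR_rmul; apply: isSR_bin.
have Hv : isSR v by apply: isSR_rmul; apply: isSR_bin.
have U : forall d, (d <= j + 5)%N -> u.2 d = bin j b d + 1 * (
   (d == 3)%:R + (d == 3 + j)%N%:R * (3%:R * b)
     + (d == 3 + 2 * j)%N%:R * ('C(3, 2)%:R * b ^+ 2)).
  move=> d Hd; rewrite /u Fel_f scomp_bin // ?spow_bin //; lia.
have V : forall d, (d <= j + 5)%N -> v.2 d = bin 2 1 d + b * (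
   (d == j.+1)%:R + (d == j.+1 + 2)%N%:R * (j.+1%:R * 1)
     + (d == j.+1 + 2 * 2)%N%:R * ('C(j.+1, 2)%:R * 1 ^+ 2)).
  move=> d Hd; rewrite /v Fel_f scomp_bin // ?spow_bin //; lia.
have Huz : forall d, (rmul u z).1 d = v.1 d /\ (rmul u z).2 d = v.2 d.
  move=> d; split; last exact: Hz.
  by rewrite gtriv_mul_g // /u /v !Fel_g.
have Huv : ag j.+3 u v.
  move=> d Hd; split; first by rewrite /u /v !Fel_g.
  rewrite U ?V; try lia.
  rewrite /bin; dec; rewrite /=; ring.
have Hn : (2 <= j.+3)%N by lia.
have [Hag Hz1 Hz2] := comm_lead Hu Hv HSR Hn Huz Huv.
have Z3 : z.2 j.+3 = (j%:R - 2%:R) * b.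
  rewrite Hz2 U ?V; try lia.
  rewrite /bin; dec; rewrite /=; ring.
have u2 : u.2 2%N = 0 by rewrite U; [rewrite /bin; dec; rewrite /=; ring | lia].
have u3 : u.2 3%N = 1 by rewrite U; [rewrite /bin; dec; rewrite /=; ring | lia].
have E1 := lev_f_1 Hu Hn Hag.
have E2 := lev_f_2 Hu Hn Hag.
rewrite u2 u3 Z3 in E1 E2.
have [_ F1] := Huz j.+4; have [_ F2] := Huz j.+3.+2.
have Z4 : z.2 j.+4 = 0.
  move: E1; rewrite F1 U ?V; try lia.
  rewrite /bin; dec; rewrite /=; move=> E; lia.
exists z; split => //; split => //.
move: E2; rewrite F2 Z4 U ?V; try lia.
rewrite /bin; dec; rewrite /=; move=> E.
solve_lin E.
Qed.

Lemma sp_1_0 (f : series) (f0 : f 0%N = 0) (f1 : f 1%N = 1) : spow f 1 0 = 0.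
Proof. rewrite spowS !big_ord_recr big_ord0 /= ?spow0 /delta0 /=. rewrite ?f0 ?f1. ring. Qed.

Lemma sp_1_1 (f : series) (f0 : f 0%N = 0) (f1 : f 1%N = 1) : spow f 1 1 = (1%:Z).
Proof. rewrite spowS !big_ord_recr big_ord0 /= ?spow0 /delta0 /=. rewrite ?f0 ?f1. ring. Qed.

Lemma sp_1_2 (f : series) (f0 : f 0%N = 0) (f1 : f 1%N = 1) : spow f 1 2 = (f 2%N).
Proof. rewrite spowS !big_ord_recr big_ord0 /= ?spow0 /delta0 /=. rewrite ?f0 ?f1. ring. Qed.

Lemma sp_1_3 (f : series) (f0 : f 0%N = 0) (f1 : f 1%N = 1) : spow f 1 3 = (f 3%N).
Proof. rewrite spowS !big_ord_recr big_ord0 /= ?spow0 /delta0 /=. rewrite ?f0 ?f1. ring. Qed.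

Lemma sp_1_4 (f : series) (f0 : f 0%N = 0) (f1 : f 1%N = 1) : spow f 1 4 = (f 4%N).
Proof. rewrite spowS !big_ord_recr big_ord0 /= ?spow0 /delta0 /=. rewrite ?f0 ?f1. ring. Qed.

Lemma sp_1_5 (f : series) (f0 : f 0%N = 0) (f1 : f 1%N = 1) : spow f 1 5 = (f 5%N).
Proof. rewrite spowS !big_ord_recr big_ord0 /= ?spow0 /delta0 /=. rewrite ?f0 ?f1. ring. Qed.

Lemma sp_1_6 (f : series) (f0 : f 0%N = 0) (f1 : f 1%N = 1) : spow f 1 6 = (f 6%N).
Proof. rewrite spowS !big_ord_recr big_ord0 /= ?spow0 /delta0 /=. rewrite ?f0 ?f1. ring. Qed.

Lemma sp_1_7 (f : series) (f0 : f 0%N = 0) (f1 : f 1%N = 1) : spow f 1 7 = (f 7%N).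
Proof. rewrite spowS !big_ord_recr big_ord0 /= ?spow0 /delta0 /=. rewrite ?f0 ?f1. ring. Qed.

Lemma sp_2_0 (f : series) (f0 : f 0%N = 0) (f1 : f 1%N = 1) : spow f 2 0 = 0.
Proof. rewrite spowS !big_ord_recr big_ord0 /= ?(sp_1_0 f0 f1). rewrite ?f0 ?f1. ring. Qed.

Lemma sp_2_1 (f : series) (f0 : f 0%N = 0) (f1 : f 1%N = 1) : spow f 2 1 = 0.
Proof. rewrite spowS !big_ord_recr big_ord0 /= ?(sp_1_0 f0 f1) ?(sp_1_1 f0 f1). rewrite ?f0 ?f1. ring. Qed.

Lemma sp_2_2 (f : series) (f0 : f 0%N = 0) (f1 : f 1%N = 1) : spow f 2 2 = (1%:Z).
Proof. rewrite spowS !big_ord_recr big_ord0 /= ?(sp_1_0 f0 f1) ?(sp_1_1 f0 f1) ?(sp_1_2 f0 f1). rewrite ?f0 ?f1. ring. Qed.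

Lemma sp_2_3 (f : series) (f0 : f 0%N = 0) (f1 : f 1%N = 1) : spow f 2 3 = (2%:Z * f 2%N).
Proof. rewrite spowS !big_ord_recr big_ord0 /= ?(sp_1_0 f0 f1) ?(sp_1_1 f0 f1) ?(sp_1_2 f0 f1) ?(sp_1_3 f0 f1). rewrite ?f0 ?f1. ring. Qed.

Lemma sp_2_4 (f : series) (f0 : f 0%N = 0) (f1 : f 1%N = 1) : spow f 2 4 = (f 2%N * f 2%N) + (2%:Z * f 3%N).
Proof. rewrite spowS !big_ord_recr big_ord0 /= ?(sp_1_0 f0 f1) ?(sp_1_1 f0 f1) ?(sp_1_2 f0 f1) ?(sp_1_3 f0 f1) ?(sp_1_4 f0 f1). rewrite ?f0 ?f1. ring. Qed.

Lemma sp_2_5 (f : series) (f0 : f 0%N = 0) (f1 : f 1%N = 1) : spow f 2 5 = (2%:Z * f 2%N * f 3%N) + (2%:Z * f 4%N).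
Proof. rewrite spowS !big_ord_recr big_ord0 /= ?(sp_1_0 f0 f1) ?(sp_1_1 f0 f1) ?(sp_1_2 f0 f1) ?(sp_1_3 f0 f1) ?(sp_1_4 f0 f1) ?(sp_1_5 f0 f1). rewrite ?f0 ?f1. ring. Qed.

Lemma sp_2_6 (f : series) (f0 : f 0%N = 0) (f1 : f 1%N = 1) : spow f 2 6 = (2%:Z * f 2%N * f 4%N) + (f 3%N * f 3%N) + (2%:Z * f 5%N).
Proof. rewrite spowS !big_ord_recr big_ord0 /= ?(sp_1_0 f0 f1) ?(sp_1_1 f0 f1) ?(sp_1_2 f0 f1) ?(sp_1_3 f0 f1) ?(sp_1_4 f0 f1) ?(sp_1_5 f0 f1) ?(sp_1_6 f0 f1). rewrite ?f0 ?f1. ring. Qed.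

Lemma sp_2_7 (f : series) (f0 : f 0%N = 0) (f1 : f 1%N = 1) : spow f 2 7 = (2%:Z * f 2%N * f 5%N) + (2%:Z * f 3%N * f 4%N) + (2%:Z * f 6%N).
Proof. rewrite spowS !big_ord_recr big_ord0 /= ?(sp_1_0 f0 f1) ?(sp_1_1 f0 f1) ?(sp_1_2 f0 f1) ?(sp_1_3 f0 f1) ?(sp_1_4 f0 f1) ?(sp_1_5 f0 f1) ?(sp_1_6 f0 f1) ?(sp_1_7 f0 f1). rewrite ?f0 ?f1. ring. Qed.

Lemma sp_3_0 (f : series) (f0 : f 0%N = 0) (f1 : f 1%N = 1) : spow f 3 0 = 0.
Proof. rewrite spowS !big_ord_recr big_ord0 /= ?(sp_2_0 f0 f1). rewrite ?f0 ?f1. ring. Qed.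

Lemma sp_3_1 (f : series) (f0 : f 0%N = 0) (f1 : f 1%N = 1) : spow f 3 1 = 0.
Proof. rewrite spowS !big_ord_recr big_ord0 /= ?(sp_2_0 f0 f1) ?(sp_2_1 f0 f1). rewrite ?f0 ?f1. ring. Qed.

Lemma sp_3_2 (f : series) (f0 : f 0%N = 0) (f1 : f 1%N = 1) : spow f 3 2 = 0.
Proof. rewrite spowS !big_ord_recr big_ord0 /= ?(sp_2_0 f0 f1) ?(sp_2_1 f0 f1) ?(sp_2_2 f0 f1). rewrite ?f0 ?f1. ring. Qed.

Lemma sp_3_3 (f : series) (f0 : f 0%N = 0) (f1 : f 1%N = 1) : spow f 3 3 = (1%:Z).
Proof. rewrite spowS !big_ord_recr big_ord0 /= ?(sp_2_0 f0 f1) ?(sp_2_1 f0 f1) ?(sp_2_2 f0 f1) ?(sp_2_3 f0 f1). rewrite ?f0 ?f1. ring. Qed.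

Lemma sp_3_4 (f : series) (f0 : f 0%N = 0) (f1 : f 1%N = 1) : spow f 3 4 = (3%:Z * f 2%N).
Proof. rewrite spowS !big_ord_recr big_ord0 /= ?(sp_2_0 f0 f1) ?(sp_2_1 f0 f1) ?(sp_2_2 f0 f1) ?(sp_2_3 f0 f1) ?(sp_2_4 f0 f1). rewrite ?f0 ?f1. ring. Qed.

Lemma sp_3_5 (f : series) (f0 : f 0%N = 0) (f1 : f 1%N = 1) : spow f 3 5 = (3%:Z * f 2%N * f 2%N) + (3%:Z * f 3%N).
Proof. rewrite spowS !big_ord_recr big_ord0 /= ?(sp_2_0 f0 f1) ?(sp_2_1 f0 f1) ?(sp_2_2 f0 f1) ?(sp_2_3 f0 f1) ?(sp_2_4 f0 f1) ?(sp_2_5 f0 f1). rewrite ?f0 ?f1. ring. Qed.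

Lemma sp_3_6 (f : series) (f0 : f 0%N = 0) (f1 : f 1%N = 1) : spow f 3 6 = (6%:Z * f 2%N * f 3%N) + (f 2%N * f 2%N * f 2%N) + (3%:Z * f 4%N).
Proof. rewrite spowS !big_ord_recr big_ord0 /= ?(sp_2_0 f0 f1) ?(sp_2_1 f0 f1) ?(sp_2_2 f0 f1) ?(sp_2_3 f0 f1) ?(sp_2_4 f0 f1) ?(sp_2_5 f0 f1) ?(sp_2_6 f0 f1). rewrite ?f0 ?f1. ring. Qed.

Lemma sp_3_7 (f : series) (f0 : f 0%N = 0) (f1 : f 1%N = 1) : spow f 3 7 = (6%:Z * f 2%N * f 4%N) + (3%:Z * f 2%N * f 2%N * f 3%N) + (3%:Z * f 3%N * f 3%N) + (3%:Z * f 5%N).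
Proof. rewrite spowS !big_ord_recr big_ord0 /= ?(sp_2_0 f0 f1) ?(sp_2_1 f0 f1) ?(sp_2_2 f0 f1) ?(sp_2_3 f0 f1) ?(sp_2_4 f0 f1) ?(sp_2_5 f0 f1) ?(sp_2_6 f0 f1) ?(sp_2_7 f0 f1). rewrite ?f0 ?f1. ring. Qed.

Lemma sp_4_0 (f : series) (f0 : f 0%N = 0) (f1 : f 1%N = 1) : spow f 4 0 = 0.
Proof. rewrite spowS !big_ord_recr big_ord0 /= ?(sp_3_0 f0 f1). rewrite ?f0 ?f1. ring. Qed.

Lemma sp_4_1 (f : series) (f0 : f 0%N = 0) (f1 : f 1%N = 1) : spow f 4 1 = 0.
Proof. rewrite spowS !big_ord_recr big_ord0 /= ?(sp_3_0 f0 f1) ?(sp_3_1 f0 f1). rewrite ?f0 ?f1. ring. Qed.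

Lemma sp_4_2 (f : series) (f0 : f 0%N = 0) (f1 : f 1%N = 1) : spow f 4 2 = 0.
Proof. rewrite spowS !big_ord_recr big_ord0 /= ?(sp_3_0 f0 f1) ?(sp_3_1 f0 f1) ?(sp_3_2 f0 f1). rewrite ?f0 ?f1. ring. Qed.

Lemma sp_4_3 (f : series) (f0 : f 0%N = 0) (f1 : f 1%N = 1) : spow f 4 3 = 0.
Proof. rewrite spowS !big_ord_recr big_ord0 /= ?(sp_3_0 f0 f1) ?(sp_3_1 f0 f1) ?(sp_3_2 f0 f1) ?(sp_3_3 f0 f1). rewrite ?f0 ?f1. ring. Qed.

Lemma sp_4_4 (f : series) (f0 : f 0%N = 0) (f1 : f 1%N = 1) : spow f 4 4 = (1%:Z).
Proof. rewrite spowS !big_ord_recr big_ord0 /= ?(sp_3_0 f0 f1) ?(sp_3_1 f0 f1) ?(sp_3_2 f0 f1) ?(sp_3_3 f0 f1) ?(sp_3_4 f0 f1). rewrite ?f0 ?f1. ring. Qed.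

Lemma sp_4_5 (f : series) (f0 : f 0%N = 0) (f1 : f 1%N = 1) : spow f 4 5 = (4%:Z * f 2%N).
Proof. rewrite spowS !big_ord_recr big_ord0 /= ?(sp_3_0 f0 f1) ?(sp_3_1 f0 f1) ?(sp_3_2 f0 f1) ?(sp_3_3 f0 f1) ?(sp_3_4 f0 f1) ?(sp_3_5 f0 f1). rewrite ?f0 ?f1. ring. Qed.

Lemma sp_4_6 (f : series) (f0 : f 0%N = 0) (f1 : f 1%N = 1) : spow f 4 6 = (6%:Z * f 2%N * f 2%N) + (4%:Z * f 3%N).
Proof. rewrite spowS !big_ord_recr big_ord0 /= ?(sp_3_0 f0 f1) ?(sp_3_1 f0 f1) ?(sp_3_2 f0 f1) ?(sp_3_3 f0 f1) ?(sp_3_4 f0 f1) ?(sp_3_5 f0 f1) ?(sp_3_6 f0 f1). rewrite ?f0 ?f1. ring. Qed.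

Lemma sp_4_7 (f : series) (f0 : f 0%N = 0) (f1 : f 1%N = 1) : spow f 4 7 = (12%:Z * f 2%N * f 3%N) + (4%:Z * f 2%N * f 2%N * f 2%N) + (4%:Z * f 4%N).
Proof. rewrite spowS !big_ord_recr big_ord0 /= ?(sp_3_0 f0 f1) ?(sp_3_1 f0 f1) ?(sp_3_2 f0 f1) ?(sp_3_3 f0 f1) ?(sp_3_4 f0 f1) ?(sp_3_5 f0 f1) ?(sp_3_6 f0 f1) ?(sp_3_7 f0 f1). rewrite ?f0 ?f1. ring. Qed.

Lemma sp_5_0 (f : series) (f0 : f 0%N = 0) (f1 : f 1%N = 1) : spow f 5 0 = 0.
Proof. rewrite spowS !big_ord_recr big_ord0 /= ?(sp_4_0 f0 f1). rewrite ?f0 ?f1. ring. Qed.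

Lemma sp_5_1 (f : series) (f0 : f 0%N = 0) (f1 : f 1%N = 1) : spow f 5 1 = 0.
Proof. rewrite spowS !big_ord_recr big_ord0 /= ?(sp_4_0 f0 f1) ?(sp_4_1 f0 f1). rewrite ?f0 ?f1. ring. Qed.

Lemma sp_5_2 (f : series) (f0 : f 0%N = 0) (f1 : f 1%N = 1) : spow f 5 2 = 0.
Proof. rewrite spowS !big_ord_recr big_ord0 /= ?(sp_4_0 f0 f1) ?(sp_4_1 f0 f1) ?(sp_4_2 f0 f1). rewrite ?f0 ?f1. ring. Qed.

Lemma sp_5_3 (f : series) (f0 : f 0%N = 0) (f1 : f 1%N = 1) : spow f 5 3 = 0.
Proof. rewrite spowS !big_ord_recr big_ord0 /= ?(sp_4_0 f0 f1) ?(sp_4_1 f0 f1) ?(sp_4_2 f0 f1) ?(sp_4_3 f0 f1). rewrite ?f0 ?f1. ring. Qed.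

Lemma sp_5_4 (f : series) (f0 : f 0%N = 0) (f1 : f 1%N = 1) : spow f 5 4 = 0.
Proof. rewrite spowS !big_ord_recr big_ord0 /= ?(sp_4_0 f0 f1) ?(sp_4_1 f0 f1) ?(sp_4_2 f0 f1) ?(sp_4_3 f0 f1) ?(sp_4_4 f0 f1). rewrite ?f0 ?f1. ring. Qed.

Lemma sp_5_5 (f : series) (f0 : f 0%N = 0) (f1 : f 1%N = 1) : spow f 5 5 = (1%:Z).
Proof. rewrite spowS !big_ord_recr big_ord0 /= ?(sp_4_0 f0 f1) ?(sp_4_1 f0 f1) ?(sp_4_2 f0 f1) ?(sp_4_3 f0 f1) ?(sp_4_4 f0 f1) ?(sp_4_5 f0 f1). rewrite ?f0 ?f1. ring. Qed.

Lemma sp_5_6 (f : series) (f0 : f 0%N = 0) (f1 : f 1%N = 1) : spow f 5 6 = (5%:Z * f 2%N).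
Proof. rewrite spowS !big_ord_recr big_ord0 /= ?(sp_4_0 f0 f1) ?(sp_4_1 f0 f1) ?(sp_4_2 f0 f1) ?(sp_4_3 f0 f1) ?(sp_4_4 f0 f1) ?(sp_4_5 f0 f1) ?(sp_4_6 f0 f1). rewrite ?f0 ?f1. ring. Qed.

Lemma sp_5_7 (f : series) (f0 : f 0%N = 0) (f1 : f 1%N = 1) : spow f 5 7 = (10%:Z * f 2%N * f 2%N) + (5%:Z * f 3%N).
Proof. rewrite spowS !big_ord_recr big_ord0 /= ?(sp_4_0 f0 f1) ?(sp_4_1 f0 f1) ?(sp_4_2 f0 f1) ?(sp_4_3 f0 f1) ?(sp_4_4 f0 f1) ?(sp_4_5 f0 f1) ?(sp_4_6 f0 f1) ?(sp_4_7 f0 f1). rewrite ?f0 ?f1. ring. Qed.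

Lemma sp_6_0 (f : series) (f0 : f 0%N = 0) (f1 : f 1%N = 1) : spow f 6 0 = 0.
Proof. rewrite spowS !big_ord_recr big_ord0 /= ?(sp_5_0 f0 f1). rewrite ?f0 ?f1. ring. Qed.

Lemma sp_6_1 (f : series) (f0 : f 0%N = 0) (f1 : f 1%N = 1) : spow f 6 1 = 0.
Proof. rewrite spowS !big_ord_recr big_ord0 /= ?(sp_5_0 f0 f1) ?(sp_5_1 f0 f1). rewrite ?f0 ?f1. ring. Qed.

Lemma sp_6_2 (f : series) (f0 : f 0%N = 0) (f1 : f 1%N = 1) : spow f 6 2 = 0.
Proof. rewrite spowS !big_ord_recr big_ord0 /= ?(sp_5_0 f0 f1) ?(sp_5_1 f0 f1) ?(sp_5_2 f0 f1). rewrite ?f0 ?f1. ring. Qed.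

Lemma sp_6_3 (f : series) (f0 : f 0%N = 0) (f1 : f 1%N = 1) : spow f 6 3 = 0.
Proof. rewrite spowS !big_ord_recr big_ord0 /= ?(sp_5_0 f0 f1) ?(sp_5_1 f0 f1) ?(sp_5_2 f0 f1) ?(sp_5_3 f0 f1). rewrite ?f0 ?f1. ring. Qed.

Lemma sp_6_4 (f : series) (f0 : f 0%N = 0) (f1 : f 1%N = 1) : spow f 6 4 = 0.
Proof. rewrite spowS !big_ord_recr big_ord0 /= ?(sp_5_0 f0 f1) ?(sp_5_1 f0 f1) ?(sp_5_2 f0 f1) ?(sp_5_3 f0 f1) ?(sp_5_4 f0 f1). rewrite ?f0 ?f1. ring. Qed.

Lemma sp_6_5 (f : series) (f0 : f 0%N = 0) (f1 : f 1%N = 1) : spow f 6 5 = 0.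
Proof. rewrite spowS !big_ord_recr big_ord0 /= ?(sp_5_0 f0 f1) ?(sp_5_1 f0 f1) ?(sp_5_2 f0 f1) ?(sp_5_3 f0 f1) ?(sp_5_4 f0 f1) ?(sp_5_5 f0 f1). rewrite ?f0 ?f1. ring. Qed.

Lemma sp_6_6 (f : series) (f0 : f 0%N = 0) (f1 : f 1%N = 1) : spow f 6 6 = (1%:Z).
Proof. rewrite spowS !big_ord_recr big_ord0 /= ?(sp_5_0 f0 f1) ?(sp_5_1 f0 f1) ?(sp_5_2 f0 f1) ?(sp_5_3 f0 f1) ?(sp_5_4 f0 f1) ?(sp_5_5 f0 f1) ?(sp_5_6 f0 f1). rewrite ?f0 ?f1. ring. Qed.

Lemma sp_6_7 (f : series) (f0 : f 0%N = 0) (f1 : f 1%N = 1) : spow f 6 7 = (6%:Z * f 2%N).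
Proof. rewrite spowS !big_ord_recr big_ord0 /= ?(sp_5_0 f0 f1) ?(sp_5_1 f0 f1) ?(sp_5_2 f0 f1) ?(sp_5_3 f0 f1) ?(sp_5_4 f0 f1) ?(sp_5_5 f0 f1) ?(sp_5_6 f0 f1) ?(sp_5_7 f0 f1). rewrite ?f0 ?f1. ring. Qed.

Lemma sp_7_0 (f : series) (f0 : f 0%N = 0) (f1 : f 1%N = 1) : spow f 7 0 = 0.
Proof. rewrite spowS !big_ord_recr big_ord0 /= ?(sp_6_0 f0 f1). rewrite ?f0 ?f1. ring. Qed.

Lemma sp_7_1 (f : series) (f0 : f 0%N = 0) (f1 : f 1%N = 1) : spow f 7 1 = 0.
Proof. rewrite spowS !big_ord_recr big_ord0 /= ?(sp_6_0 f0 f1) ?(sp_6_1 f0 f1). rewrite ?f0 ?f1. ring. Qed.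

Lemma sp_7_2 (f : series) (f0 : f 0%N = 0) (f1 : f 1%N = 1) : spow f 7 2 = 0.
Proof. rewrite spowS !big_ord_recr big_ord0 /= ?(sp_6_0 f0 f1) ?(sp_6_1 f0 f1) ?(sp_6_2 f0 f1). rewrite ?f0 ?f1. ring. Qed.

Lemma sp_7_3 (f : series) (f0 : f 0%N = 0) (f1 : f 1%N = 1) : spow f 7 3 = 0.
Proof. rewrite spowS !big_ord_recr big_ord0 /= ?(sp_6_0 f0 f1) ?(sp_6_1 f0 f1) ?(sp_6_2 f0 f1) ?(sp_6_3 f0 f1). rewrite ?f0 ?f1. ring. Qed.

Lemma sp_7_4 (f : series) (f0 : f 0%N = 0) (f1 : f 1%N = 1) : spow f 7 4 = 0.
Proof. rewrite spowS !big_ord_recr big_ord0 /= ?(sp_6_0 f0 f1) ?(sp_6_1 f0 f1) ?(sp_6_2 f0 f1) ?(sp_6_3 f0 f1) ?(sp_6_4 f0 f1). rewrite ?f0 ?f1. ring. Qed.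

Lemma sp_7_5 (f : series) (f0 : f 0%N = 0) (f1 : f 1%N = 1) : spow f 7 5 = 0.
Proof. rewrite spowS !big_ord_recr big_ord0 /= ?(sp_6_0 f0 f1) ?(sp_6_1 f0 f1) ?(sp_6_2 f0 f1) ?(sp_6_3 f0 f1) ?(sp_6_4 f0 f1) ?(sp_6_5 f0 f1). rewrite ?f0 ?f1. ring. Qed.

Lemma sp_7_6 (f : series) (f0 : f 0%N = 0) (f1 : f 1%N = 1) : spow f 7 6 = 0.
Proof. rewrite spowS !big_ord_recr big_ord0 /= ?(sp_6_0 f0 f1) ?(sp_6_1 f0 f1) ?(sp_6_2 f0 f1) ?(sp_6_3 f0 f1) ?(sp_6_4 f0 f1) ?(sp_6_5 f0 f1) ?(sp_6_6 f0 f1). rewrite ?f0 ?f1. ring. Qed.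

Lemma sp_7_7 (f : series) (f0 : f 0%N = 0) (f1 : f 1%N = 1) : spow f 7 7 = (1%:Z).
Proof. rewrite spowS !big_ord_recr big_ord0 /= ?(sp_6_0 f0 f1) ?(sp_6_1 f0 f1) ?(sp_6_2 f0 f1) ?(sp_6_3 f0 f1) ?(sp_6_4 f0 f1) ?(sp_6_5 f0 f1) ?(sp_6_6 f0 f1) ?(sp_6_7 f0 f1). rewrite ?f0 ?f1. ring. Qed.

Lemma comp_2 (g f : series) (f0 : f 0%N = 0) (f1 : f 1%N = 1) (g0 : g 0%N = 0) (g1 : g 1%N = 1) :
  scomp g f 2 = (f 2%N) + (g 2%N).
Proof. rewrite scompE !big_ord_recr big_ord0 /= ?(sp_1_2 f0 f1) ?(sp_2_2 f0 f1) ?spow0 /delta0 /=. rewrite ?g0 ?g1. ring. Qed.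

Lemma comp_3 (g f : series) (f0 : f 0%N = 0) (f1 : f 1%N = 1) (g0 : g 0%N = 0) (g1 : g 1%N = 1) :
  scomp g f 3 = (2%:Z * f 2%N * g 2%N) + (f 3%N) + (g 3%N).
Proof. rewrite scompE !big_ord_recr big_ord0 /= ?(sp_1_3 f0 f1) ?(sp_2_3 f0 f1) ?(sp_3_3 f0 f1) ?spow0 /delta0 /=. rewrite ?g0 ?g1. ring. Qed.

Lemma comp_4 (g f : series) (f0 : f 0%N = 0) (f1 : f 1%N = 1) (g0 : g 0%N = 0) (g1 : g 1%N = 1) :
  scomp g f 4 = (3%:Z * f 2%N * g 3%N) + (f 2%N * f 2%N * g 2%N) + (2%:Z * f 3%N * g 2%N) + (f 4%N) + (g 4%N).
Proof. rewrite scompE !big_ord_recr big_ord0 /= ?(sp_1_4 f0 f1) ?(sp_2_4 f0 f1) ?(sp_3_4 f0 f1) ?(sp_4_4 f0 f1) ?spow0 /delta0 /=. rewrite ?g0 ?g1. ring. Qed.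

Lemma comp_5 (g f : series) (f0 : f 0%N = 0) (f1 : f 1%N = 1) (g0 : g 0%N = 0) (g1 : g 1%N = 1) :
  scomp g f 5 = (2%:Z * f 2%N * f 3%N * g 2%N) + (4%:Z * f 2%N * g 4%N) + (3%:Z * f 2%N * f 2%N * g 3%N) + (3%:Z * f 3%N * g 3%N) + (2%:Z * f 4%N * g 2%N) + (f 5%N) + (g 5%N).
Proof. rewrite scompE !big_ord_recr big_ord0 /= ?(sp_1_5 f0 f1) ?(sp_2_5 f0 f1) ?(sp_3_5 f0 f1) ?(sp_4_5 f0 f1) ?(sp_5_5 f0 f1) ?spow0 /delta0 /=. rewrite ?g0 ?g1. ring. Qed.

Lemma comp_6 (g f : series) (f0 : f 0%N = 0) (f1 : f 1%N = 1) (g0 : g 0%N = 0) (g1 : g 1%N = 1) :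
  scomp g f 6 = (6%:Z * f 2%N * f 3%N * g 3%N) + (2%:Z * f 2%N * f 4%N * g 2%N) + (5%:Z * f 2%N * g 5%N) + (6%:Z * f 2%N * f 2%N * g 4%N) + (f 2%N * f 2%N * f 2%N * g 3%N) + (4%:Z * f 3%N * g 4%N) + (f 3%N * f 3%N * g 2%N) + (3%:Z * f 4%N * g 3%N) + (2%:Z * f 5%N * g 2%N) + (f 6%N) + (g 6%N).
Proof. rewrite scompE !big_ord_recr big_ord0 /= ?(sp_1_6 f0 f1) ?(sp_2_6 f0 f1) ?(sp_3_6 f0 f1) ?(sp_4_6 f0 f1) ?(sp_5_6 f0 f1) ?(sp_6_6 f0 f1) ?spow0 /delta0 /=. rewrite ?g0 ?g1. ring. Qed.

Lemma comp_7 (g f : series) (f0 : f 0%N = 0) (f1 : f 1%N = 1) (g0 : g 0%N = 0) (g1 : g 1%N = 1) :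
  scomp g f 7 = (12%:Z * f 2%N * f 3%N * g 4%N) + (6%:Z * f 2%N * f 4%N * g 3%N) + (2%:Z * f 2%N * f 5%N * g 2%N) + (6%:Z * f 2%N * g 6%N) + (3%:Z * f 2%N * f 2%N * f 3%N * g 3%N) + (10%:Z * f 2%N * f 2%N * g 5%N) + (4%:Z * f 2%N * f 2%N * f 2%N * g 4%N) + (2%:Z * f 3%N * f 4%N * g 2%N) + (5%:Z * f 3%N * g 5%N) + (3%:Z * f 3%N * f 3%N * g 3%N) + (4%:Z * f 4%N * g 4%N) + (3%:Z * f 5%N * g 3%N) + (2%:Z * f 6%N * g 2%N) + (f 7%N) + (g 7%N).
Proof. rewrite scompE !big_ord_recr big_ord0 /= ?(sp_1_7 f0 f1) ?(sp_2_7 f0 f1) ?(sp_3_7 f0 f1) ?(sp_4_7 f0 f1) ?(sp_5_7 f0 f1) ?(sp_6_7 f0 f1) ?(sp_7_7 f0 f1) ?spow0 /delta0 /=. rewrite ?g0 ?g1. ring. Qed.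

Definition C2 (x : int) : int := ((x * (x - 1)) %/ 2)%Z.

Lemma C2_mul2 x : C2 x * 2 = x * (x - 1).
Proof.
rewrite /C2; apply: divzK; apply/dvdz_mod0P.
have Hx := divz_eq x 2.
have H0 : 0 <= (x %% 2)%Z by apply: modz_ge0.
have H1 : (x %% 2)%Z < 2 by apply: ltz_pmod.
set q := (x %/ 2)%Z in Hx; set r := (x %% 2)%Z in Hx H0 H1.
have [Er|Er] : r = 0 \/ r = 1 by lia.
  have -> : x * (x - 1) = (q * (x - 1)) * 2 by rewrite {1}Hx Er; ring.
  exact: modzMl.
have -> : x * (x - 1) = (x * q) * 2 by rewrite {2}Hx Er; ring.
exact: modzMl.
Qed.

Lemma C2D x y : C2 (x + y) = C2 x + C2 y + x * y.
Proof.
apply: (@mulIf _ 2) => //; rewrite !mulrDl !C2_mul2; ring.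
Qed.

Lemma C2_0 : C2 0 = 0.
Proof. by rewrite /C2 mul0r. Qed.

Definition A4 (f : series) : int := f 4%N + f 5%N + C2 (f 3%N).
Definition A5 (f : series) : int := f 5%N + f 7%N + f 3%N * f 5%N.

Definition phi (x : riordan) : int * int * int * 'Z_2 * 'Z_2 :=
  (x.1 1%N, x.2 2%N, x.2 3%N - x.2 2%N ^+ 2, (A4 x.2)%:~R, (A5 x.2)%:~R).

Lemma Z2_2 : (2%:~R : 'Z_2) = 0.
Proof. rewrite pmulrn; exact: pchar_Zp. Qed.

Lemma Z2_even k : ((k * 2)%:~R : 'Z_2) = 0.
Proof. by rewrite intrM Z2_2 mulr0. Qed.

Lemma Z2_sq x : ((x * (x - 1))%:~R : 'Z_2) = 0.
Proof. by rewrite -C2_mul2 Z2_even. Qed.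
Definition K4 (f g : series) : int := (2%:Z * f 2%N * f 3%N * g 2%N) + (f 2%N * g 2%N * g 3%N) + (2%:Z * f 2%N * g 4%N) + (f 3%N * g 2%N) + (2%:Z * f 3%N * g 3%N) + (f 4%N * g 2%N).
Definition K5 (f g : series) : int := (f 2%N * f 3%N * g 2%N) + (4%:Z * f 2%N * f 3%N * g 2%N * g 3%N) + (8%:Z * f 2%N * f 3%N * g 4%N) + (f 2%N * f 3%N * f 3%N * g 2%N) + (2%:Z * f 2%N * f 4%N * g 2%N * g 2%N) + (3%:Z * f 2%N * f 4%N * g 3%N) + (2%:Z * f 2%N * f 5%N * g 2%N) + (f 2%N * g 2%N * g 5%N) + (2%:Z * f 2%N * g 3%N * g 4%N) + (2%:Z * f 2%N * g 4%N) + (3%:Z * f 2%N * g 6%N) + (2%:Z * f 2%N * f 2%N * f 3%N * g 2%N * g 2%N) + (3%:Z * f 2%N * f 2%N * f 3%N * g 3%N) + (4%:Z * f 2%N * f 2%N * g 2%N * g 4%N) + (5%:Z * f 2%N * f 2%N * g 5%N) + (3%:Z * f 2%N * f 2%N * f 2%N * g 2%N * g 3%N) + (2%:Z * f 2%N * f 2%N * f 2%N * g 4%N) + (2%:Z * f 3%N * f 4%N * g 2%N) + (3%:Z * f 3%N * g 5%N) + (3%:Z * f 3%N * f 3%N * g 3%N) + (f 4%N * g 2%N) + (f 4%N * g 2%N * g 3%N) + (2%:Z * f 4%N * g 4%N) + (2%:Z * f 5%N * g 3%N) + (f 6%N * g 2%N).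

Lemma Z2_mulsq a x : ((a * (x * (x - 1)))%:~R : 'Z_2) = 0.
Proof. by rewrite intrM Z2_sq mulr0. Qed.

Lemma g1_hom x y : isSR x -> isSR y -> (rmul x y).1 1%N = x.1 1%N + y.1 1%N.
Proof.
move: x y => [x1 x2] [y1 y2] [/= x10 [x20 x21]] [/= y10 [y20 y21]].
rewrite /rmul /= smulE !big_ord_recr big_ord0 /= !scompE !big_ord_recr !big_ord0 /=.
rewrite spow0 /delta0 /= spow1 x21 y10 ?y20 x10; ring.
Qed.

Lemma D4 (f g : series) : f 0%N = 0 -> f 1%N = 1 -> g 0%N = 0 -> g 1%N = 1 ->
  A4 (scomp g f) = A4 f + A4 g + (K4 f g + C2 (f 2%N * g 2%N)) * 2
    + g 2%N * (f 2%N * (f 2%N - 1)) + (3 * g 3%N) * ((f 2%N + 1) * ((f 2%N + 1) - 1))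
    + (f 2%N * g 2%N + 1) * ((f 2%N * g 2%N + 1) - 1).
Proof.
move=> f0 f1 g0 g1.
have Eh3 : scomp g f 3 = (f 3%N + g 3%N) + (f 2%N * g 2%N + f 2%N * g 2%N).
  by rewrite comp_3 //; ring.
rewrite /A4 Eh3 !C2D comp_4 // comp_5 // /K4; ring.
Qed.

Lemma D5 (f g : series) : f 0%N = 0 -> f 1%N = 1 -> g 0%N = 0 -> g 1%N = 1 ->
  A5 (scomp g f) = A5 f + A5 g + K5 f g * 2
    + (3 * (f 3%N + f 2%N ^+ 2)) * ((g 3%N + 1) * ((g 3%N + 1) - 1)).
Proof.
move=> f0 f1 g0 g1.
rewrite /A5 comp_3 // comp_5 // comp_7 // /K5; ring.
Qed.

Lemma phi_hom x y : isSR x -> isSR y -> phi (rmul x y) = phi x + phi y.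
Proof.
move=> Hx Hy; have G1 := g1_hom Hx Hy.
move: x y Hx Hy G1 => [x1 x2] [y1 y2] [/= x10 [x20 x21]] [/= y10 [y20 y21]] G1.
rewrite /phi /= G1.
have -> : scomp y2 x2 2 = x2 2%N + y2 2%N by rewrite comp_2 //; ring.
have -> : scomp y2 x2 3 = x2 3%N + y2 3%N + 2 * x2 2%N * y2 2%N by rewrite comp_3 //; ring.
rewrite D4 // D5 //.
rewrite !intrD Z2_even !Z2_mulsq Z2_sq Z2_even !addr0.
congr (_, _, _, _, _); rewrite /=; ring.
Qed.

Lemma pc_SR w : prod_comm w -> isSR w.
Proof.
elim=> [|w' z _ IH [Hz _]]; first exact: isSR_rid.
exact: isSR_rmul.
Qed.

Lemma phi_ext (a b : riordan) : (forall d, a.1 d = b.1 d /\ a.2 d = b.2 d) -> phi a = phi b.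
Proof.
move=> H; rewrite /phi /A4 /A5.
have E1 : forall d, a.1 d = b.1 d by move=> d; case: (H d).
have E2 : forall d, a.2 d = b.2 d by move=> d; case: (H d).
by rewrite !E1 !E2.
Qed.

Lemma phi_ag (a b : riordan) : ag 8 a b -> phi a = phi b.
Proof.
move=> H; rewrite /phi /A4 /A5.
have E1 : forall d, (d < 8)%N -> a.1 d = b.1 d by move=> d Hd; case: (H d Hd).
have E2 : forall d, (d < 8)%N -> a.2 d = b.2 d by move=> d Hd; case: (H d Hd).
by rewrite !E1 // !E2.
Qed.

Lemma phi_rid : phi rid = 0.
Proof.
rewrite /phi /A4 /A5 /rid /= /tX /delta0 /= C2_0.
by congr (_, _, _, _, _); rewrite ?mulr0 ?addr0 ?subr0.
Qed.

Lemma phi_comm z : is_commutator z -> phi z = 0.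
Proof.
move=> [Hz [x [y [Hx [Hy H]]]]].
have := phi_ext H.
rewrite !phi_hom //; try apply: isSR_rmul => //.
by rewrite (addrC (phi y)) -{2}(addr0 (phi x + phi y)) => /addrI.
Qed.

Lemma phi_pc w : prod_comm w -> phi w = 0.
Proof.
elim=> [|w' z Hw IH Hz]; first exact: phi_rid.
have HzS : isSR z by case: Hz.
by rewrite phi_hom ?IH ?phi_comm ?addr0 //; exact: pc_SR.
Qed.

Lemma top_phi x : isSR x -> in_top_commutator x -> phi x = 0.
Proof.
move=> Hx Htop; have [w [Hw Hag]] := Htop 7%N.
have H8 : ag 8 x w.
  move=> d Hd; have Hd' : (d <= 7)%N by lia.
  exact: Hag d Hd'.
by rewrite (phi_ag H8) phi_pc.
Qed.

Lemma ag_trans n a b c : ag n a b -> ag n b c -> ag n a c.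
Proof.
move=> H1 H2 i Hi; case: (H1 i Hi) => -> ->; exact: H2.
Qed.

Lemma ag_le m n a b : (m <= n)%N -> ag n a b -> ag m a b.
Proof. move=> Hmn H i Hi; apply: H; lia. Qed.

Lemma Z2_zero (a : int) : (a%:~R : 'Z_2) = 0 -> exists k, a = k * 2.
Proof.
move=> H.
have Ha := divz_eq a 2.
have H0 : 0 <= (a %% 2)%Z by apply: modz_ge0.
have H1 : (a %% 2)%Z < 2 by apply: ltz_pmod.
exists (a %/ 2)%Z.
have [Er|Er] : (a %% 2)%Z = 0 \/ (a %% 2)%Z = 1 by lia.
  by rewrite {1}Ha Er addr0.
exfalso; move: H; rewrite Ha Er intrD Z2_even add0r.
by move/eqP; rewrite oner_eq0.
Qed.

Lemma phi0E x : phi x = 0 ->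
  [/\ x.1 1%N = 0, x.2 2%N = 0, x.2 3%N = 0, ((A4 x.2)%:~R : 'Z_2) = 0 & ((A5 x.2)%:~R : 'Z_2) = 0].
Proof.
rewrite /phi => H; case: H => H1 H2 H3 H4 H5; split => //.
by move: H3; rewrite H2 expr0n /= subr0.
Qed.

Lemma mul_gtriv w z n : isSR w -> (2 <= n)%N -> gtriv z -> ag n z rid ->
  [/\ ag n (rmul w z) w, (rmul w z).1 n = w.1 n & (rmul w z).2 n = w.2 n + z.2 n].
Proof.
move=> Hw Hn Hg Hz; split; [exact: ag_mul|exact: gtriv_mul_g|exact: lev_f_eq].
Qed.

Lemma finish1 x w n z : isSR w -> prod_comm w -> (2 <= n)%N -> ag n w x -> w.1 n = x.1 n ->
  is_commutator z -> gtriv z -> ag n z rid -> z.2 n = x.2 n - w.2 n ->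
  exists w', prod_comm w' /\ ag n.+1 w' x.
Proof.
move=> Hw Hpc Hn Hwx Hw1 Hc Hg Hz Hz2.
exists (rmul w z); split; first exact: pc_mul.
have [Ha E1 E2] := mul_gtriv Hw Hn Hg Hz.
move=> i Hi; case: (ltngtP i n) => Hin; [exact: ag_trans Ha Hwx i Hin | lia |].
subst i; split; first by rewrite E1.
by rewrite E2 Hz2; ring.
Qed.

Lemma fam1' i j n a b : (1 <= i)%N -> (i < j)%N -> n = (i + j).+1 ->
  exists z, [/\ is_commutator z, gtriv z, isSR z, ag n z rid &
     z.2 n = (j%:R - i%:R) * a * b /\
     ((3 <= i)%N -> z.2 n.+1 = 0 /\ z.2 n.+2 = 0)].
Proof. by move=> Hi Hij ->; apply: fam1. Qed.

Lemma fam2' j n1 b : (3 <= j)%N -> n1 = j.+2 ->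
  exists z, [/\ is_commutator z, gtriv z, isSR z, ag n1 z rid &
     z.2 n1 = (j%:R - 1) * b /\
     z.2 n1.+1 = b * ('C(j.+1, 2)%:R - (j%:R - 1) * j.+2%:R)].
Proof. by move=> Hj ->; apply: fam2. Qed.

Lemma fam3' j n2 b : (3 <= j)%N -> n2 = j.+3 ->
  exists z, [/\ is_commutator z, gtriv z, isSR z, ag n2 z rid &
     [/\ z.2 n2 = (j%:R - 2%:R) * b, z.2 n2.+1 = 0 &
     z.2 n2.+2 = b * ('C(j.+1, 2)%:R - (j%:R - 2%:R) * j.+3%:R)]].
Proof. by move=> Hj ->; apply: fam3. Qed.

Lemma binC2_odd q : ('C((2 * q).+1, 2)%:R : int) = (2 * q).+1%:R * q%:R.
Proof.
apply: (@mulIf _ 2) => //.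
have H : forall k, ('C(k, 2)%:R : int) * 2 = k%:R * (k%:R - 1).
  elim=> [|k IH]; first by rewrite bin0n /=; ring.
  rewrite binS bin1 natrD mulrDl IH; ring.
rewrite H; ring.
Qed.

Lemma oddstep1 p x w n1 : n1 = (4 * p + 8)%N -> isSR x -> isSR w -> prod_comm w ->
  ag n1.+1 w x -> w.1 n1.+1 = x.1 n1.+1 -> w.2 2%N = 0 ->
  exists w', prod_comm w' /\ ag n1.+2 w' x.
Proof.
move=> En1 Hx Hw Hpc Hwx Hw1 w2z.
have Hn1 : (2 <= n1)%N by lia.
set δ := x.2 n1.+1 - w.2 n1.+1.
have [z1 [Hc1 Hg1 HS1 Ha1 [Z1a Z1b]]] := @fam2' (4 * p + 6) n1 δ ltac:(lia) ltac:(lia).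
set w2 := rmul w z1.
have Hw2 : isSR w2 by apply: isSR_rmul.
have Hpc2 : prod_comm w2 by apply: pc_mul.
have A2 : ag n1 w2 w by apply: ag_mul.
have W2a : w2.2 n1 = w.2 n1 + z1.2 n1 by apply: lev_f_eq.
have W2b : w2.2 n1.+1 = w.2 n1.+1 + z1.2 n1.+1.
  by rewrite /w2 (lev_f_1 Hw Hn1 Ha1) w2z; ring.
have w22 : w2.2 2%N = 0 by case: (A2 2%N) => //; lia.
have [z2 [Hc2 Hg2 HS2 Ha2 [Z2a Z2b]]] :=
  @fam1' (2 * p + 3) (2 * p + 4) n1 1 (- ((4 * p + 6)%:R - 1) * δ) ltac:(lia) ltac:(lia) ltac:(lia).
have [Z2b1 _] := Z2b ltac:(lia).
set w3 := rmul w2 z2.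
have Hw3 : isSR w3 by apply: isSR_rmul.
have Hpc3 : prod_comm w3 by apply: pc_mul.
have A3 : ag n1 w3 w2 by apply: ag_mul.
have W3a : w3.2 n1 = w2.2 n1 + z2.2 n1 by apply: lev_f_eq.
have W3b : w3.2 n1.+1 = w2.2 n1.+1.
  by rewrite /w3 (lev_f_1 Hw2 Hn1 Ha2) w22 Z2b1; ring.
have G3 : forall d, w3.1 d = w.1 d by move=> d; rewrite !gtriv_mul_g.
have Hw3x : ag n1.+1 w3 x.
  move=> i Hi; case: (ltngtP i n1) => Hin.
  - exact: (ag_trans (ag_trans A3 A2) (ag_le (leqnSn _) Hwx)) i Hin.
  - lia.
  subst i; case: (Hwx n1 (ltnSn _)) => E1 E2; split; first by rewrite G3.
  rewrite W3a W2a Z1a Z2a E2; ring.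
set γ := δ * (4 * p%:R ^+ 2 + 13 * p%:R + 10).
have [z3 [Hc3 Hg3 HS3 Ha3 [Z3a _]]] :=
  @fam1' (2 * p + 3) (2 * p + 5) n1.+1 1 γ ltac:(lia) ltac:(lia) ltac:(lia).
apply: (finish1 Hw3 Hpc3 _ Hw3x _ Hc3 Hg3 Ha3); first lia.
  by rewrite G3.
rewrite Z3a W3b W2b Z1b.
rewrite (_ : (4 * p + 6).+1 = (2 * (2 * p + 3)).+1)%N; last lia.
rewrite binC2_odd /γ /δ; rewrite ?natrD ?natrM; ring.
Qed.

Lemma oddstep3 p x w n2 : n2 = (4 * p + 9)%N -> isSR x -> isSR w -> prod_comm w ->
  ag n2.+2 w x -> w.1 n2.+2 = x.1 n2.+2 -> w.2 2%N = 0 -> w.2 3%N = 0 ->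
  exists w', prod_comm w' /\ ag n2.+3 w' x.
Proof.
move=> En2 Hx Hw Hpc Hwx Hw1 w2z w3z.
have Hn2 : (2 <= n2)%N by lia.
set δ := x.2 n2.+2 - w.2 n2.+2.
have [z1 [Hc1 Hg1 HS1 Ha1 [Z1a Z1b Z1c]]] := @fam3' (4 * p + 6) n2 δ ltac:(lia) ltac:(lia).
set w2 := rmul w z1.
have Hw2 : isSR w2 by apply: isSR_rmul.
have Hpc2 : prod_comm w2 by apply: pc_mul.
have A2 : ag n2 w2 w by apply: ag_mul.
have W2a : w2.2 n2 = w.2 n2 + z1.2 n2 by apply: lev_f_eq.
have W2b : w2.2 n2.+1 = w.2 n2.+1.
  by rewrite /w2 (lev_f_1 Hw Hn2 Ha1) w2z Z1b; ring.
have W2c : w2.2 n2.+2 = w.2 n2.+2 + z1.2 n2.+2.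
  by rewrite /w2 (lev_f_2 Hw Hn2 Ha1) w2z w3z Z1b; ring.
have w22 : w2.2 2%N = 0 by case: (A2 2%N) => //; lia.
have w23 : w2.2 3%N = 0 by case: (A2 3%N) => //; lia.
have [z2 [Hc2 Hg2 HS2 Ha2 [Z2a Z2b]]] :=
  @fam1' (2 * p + 3) (2 * p + 5) n2 1 (- (2 * p + 2)%:R * δ) ltac:(lia) ltac:(lia) ltac:(lia).
have [Z2b1 Z2b2] := Z2b ltac:(lia).
set w3 := rmul w2 z2.
have Hw3 : isSR w3 by apply: isSR_rmul.
have Hpc3 : prod_comm w3 by apply: pc_mul.
have A3 : ag n2 w3 w2 by apply: ag_mul.
have W3a : w3.2 n2 = w2.2 n2 + z2.2 n2 by apply: lev_f_eq.
have W3b : w3.2 n2.+1 = w2.2 n2.+1.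
  by rewrite /w3 (lev_f_1 Hw2 Hn2 Ha2) w22 Z2b1; ring.
have W3c : w3.2 n2.+2 = w2.2 n2.+2.
  by rewrite /w3 (lev_f_2 Hw2 Hn2 Ha2) w22 w23 Z2b1 Z2b2; ring.
have G3 : forall d, w3.1 d = w.1 d by move=> d; rewrite !gtriv_mul_g.
have Hw3x : ag n2.+2 w3 x.
  move=> i Hi; case: (ltngtP i n2) => Hin.
  - exact: (ag_trans (ag_trans A3 A2) (ag_le (leqW (leqnSn _)) Hwx)) i Hin.
  - have Ei : i = n2.+1 by lia.
    subst i; case: (Hwx n2.+1 Hi) => E1 E2; split; first by rewrite G3.
    by rewrite W3b W2b E2.
  subst i; case: (Hwx n2 ltac:(lia)) => E1 E2; split; first by rewrite G3.
  rewrite W3a W2a Z1a Z2a E2; ring.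
set γ := δ * (4 * p%:R ^+ 2 + 13 * p%:R + 8).
have [z3 [Hc3 Hg3 HS3 Ha3 [Z3a _]]] :=
  @fam1' (2 * p + 4) (2 * p + 6) n2.+2 1 γ ltac:(lia) ltac:(lia) ltac:(lia).
apply: (finish1 Hw3 Hpc3 _ Hw3x _ Hc3 Hg3 Ha3); first lia.
  by rewrite G3.
rewrite Z3a W3c W2c Z1c.
rewrite (_ : (4 * p + 6).+1 = (2 * (2 * p + 3)).+1)%N; last lia.
rewrite binC2_odd /γ /δ; rewrite ?natrD ?natrM; ring.
Qed.

Lemma fstep x w n : isSR x -> phi x = 0 -> prod_comm w -> (2 <= n)%N -> ag n w x ->
  w.1 n = x.1 n -> exists w', prod_comm w' /\ ag n.+1 w' x.
Proof.
move=> Hx Hphx Hpc Hn Hwx Hw1.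
have Hw := pc_SR Hpc.
have [x11 x22 x33 x4 x5] := phi0E Hphx.
have [w11 w22 w33 w4 w5] := phi0E (phi_pc Hpc).
have Fin : forall z, is_commutator z -> gtriv z -> ag n z rid -> z.2 n = x.2 n - w.2 n ->
    exists w', prod_comm w' /\ ag n.+1 w' x.
  by move=> z Hc Hg Hz Hz2; apply: (finish1 Hw Hpc Hn Hwx Hw1 Hc Hg Hz).
have Same : w.2 n = x.2 n -> exists w', prod_comm w' /\ ag n.+1 w' x.
  move=> E; exists w; split => // i Hi; case: (ltngtP i n) => Hin.
  - exact: Hwx.
  - lia.
  by subst i.
case: (ltnP n 8) => Hn8.
  case: n Hn Hn8 Hwx Hw1 Fin Same => [|[|[|[|[|[|[|[|n]]]]]]]] //= Hn Hn8 Hwx Hw1 Fin Same.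
  - by apply: Same; rewrite w22 x22.
  - by apply: Same; rewrite w33 x33.
  - have [z [Hc Hg HS Ha [Za _]]] := @fam1' 1 2 4 1 (x.2 4%N - w.2 4%N) isT isT erefl.
    by apply: (Fin z) => //; rewrite Za; ring.
  - have Eδ : x.2 5%N - w.2 5%N = A4 x.2 - A4 w.2.
      rewrite /A4; case: (Hwx 3%N) => // _ ->; case: (Hwx 4%N) => // _ ->; ring.
    have [k Ek] : exists k, x.2 5%N - w.2 5%N = k * 2 by apply: Z2_zero; rewrite Eδ intrB x4 w4 subrr.
    have [z [Hc Hg HS Ha [Za _]]] := @fam1' 1 3 5 1 k isT isT erefl.
    by apply: (Fin z) => //; rewrite Za Ek; ring.
  - have [z [Hc Hg HS Ha [Za _]]] := @fam1' 2 3 6 1 (x.2 6%N - w.2 6%N) isT isT erefl.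
    by apply: (Fin z) => //; rewrite Za; ring.
  - have Eδ : x.2 7%N - w.2 7%N = A5 x.2 - A5 w.2.
      rewrite /A5; case: (Hwx 3%N) => // _ ->; case: (Hwx 5%N) => // _ ->; ring.
    have [k Ek] : exists k, x.2 7%N - w.2 7%N = k * 2 by apply: Z2_zero; rewrite Eδ intrB x5 w5 subrr.
    have [z [Hc Hg HS Ha [Za _]]] := @fam1' 2 4 7 1 k isT isT erefl.
    by apply: (Fin z) => //; rewrite Za Ek; ring.
set δ := x.2 n - w.2 n.
have Hq := divn_eq n 4.
have Hr := ltn_pmod n (isT : (0 < 4)%N).
set q := (n %/ 4)%N in Hq; set r := (n %% 4)%N in Hq Hr.
case Er : r Hq Hr => [|[|[|[|r']]]] Hq Hr; try lia.
- have [z [Hc Hg HS Ha [Za _]]] := @fam1' (2 * q - 1) (2 * q) n 1 δ ltac:(lia) ltac:(lia) ltac:(lia).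
  apply: (Fin z) => //; rewrite Za /δ.
  have E : (2 * q)%N = (2 * q - 1).+1 by lia.
  by rewrite [in X in X - _]E; ring.
- have En : n = (4 * (q - 2) + 8).+1 by lia.
  move: Hwx Hw1; rewrite En => Hwx' Hw1'.
  exact: (@oddstep1 (q - 2) x w _ erefl Hx Hw Hpc Hwx' Hw1' w22).
- have [z [Hc Hg HS Ha [Za _]]] := @fam1' (2 * q) (2 * q).+1 n 1 δ ltac:(lia) ltac:(lia) ltac:(lia).
  by apply: (Fin z) => //; rewrite Za /δ; ring.
- have En : n = (4 * (q - 2) + 9).+2 by lia.
  move: Hwx Hw1; rewrite En => Hwx' Hw1'.
  exact: (@oddstep3 (q - 2) x w _ erefl Hx Hw Hpc Hwx' Hw1' w22 w33).
Qed.

Lemma gstep x w n : isSR x -> prod_comm w -> (2 <= n)%N -> ag n w x ->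
  exists w1, [/\ prod_comm w1, ag n w1 x & w1.1 n = x.1 n].
Proof.
move=> Hx Hpc Hn Hwx; have Hw := pc_SR Hpc.
have [z [Hc HS Ha Z1 Z2]] := @gfam n.-1 (x.1 n - w.1 n) ltac:(lia).
rewrite (_ : n.-1.+1 = n) in Ha Z1 Z2; last lia.
exists (rmul w z); split; first exact: pc_mul.
  exact: ag_trans (ag_mul Hw Hn Ha) Hwx.
rewrite (lev_g_eq Hw _ Ha) ?Z1; [ring|lia].
Qed.

Lemma approx x : isSR x -> phi x = 0 -> forall N, exists w, prod_comm w /\ ag N w x.
Proof.
move=> Hx Hphx; elim=> [|N [w [Hpc Hwx]]].
  by exists rid; split; [exact: pc_id | move=> i].
have Hw := pc_SR Hpc.
case: (ltnP N 2) => HN.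
  exists w; split => // i Hi.
  case: (Hx) => x10 [x20 x21]; case: (Hw) => w10 [w20 w21].
  have [x11 _ _ _ _] := phi0E Hphx; have [w11 _ _ _ _] := phi0E (phi_pc Hpc).
  case: i Hi => [|[|i]] Hi; [by rewrite x10 w10 x20 w20 | by rewrite x11 w11 x21 w21 | lia].
have [w1 [Hpc1 Hw1x Hw11]] := gstep Hx Hpc HN Hwx.
exact: fstep Hx Hphx Hpc1 HN Hw1x Hw11.
Qed.

Lemma phi_top x : isSR x -> phi x = 0 -> in_top_commutator x.
Proof.
move=> Hx Hphx N; have [w [Hpc Hwx]] := approx Hx Hphx N.+1.
exists w; split => // n Hn; have Hn' : (n < N.+1)%N by lia.
by case: (Hwx n Hn') => -> ->.
Qed.

Lemma phi_cond g f : isSR (g, f) ->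
  (phi (g, f) = 0 <-> [/\ g 1%N = 0, f 2%N = 0, f 3%N = 0,
            (f 4%N == f 5%N %[mod 2])%Z & (f 5%N == f 7%N %[mod 2])%Z]).
Proof.
move=> HSR; split.
  move/phi0E => [/= g1 f2 f3 H4 H5]; split => //.
    move: H4; rewrite /A4 f3 C2_0 addr0 => /Z2_zero [k Hk].
    rewrite eqz_mod_dvd; apply/dvdzP; exists (k - f 5%N).
    rewrite mulrBl -Hk; ring.
  move: H5; rewrite /A5 f3 mul0r addr0 => /Z2_zero [k Hk].
  rewrite eqz_mod_dvd; apply/dvdzP; exists (k - f 7%N).
  rewrite mulrBl -Hk; ring.
move=> [g1 f2 f3 H4 H5].
move: H4 H5; rewrite !eqz_mod_dvd => /dvdzP [k4 Hk4] /dvdzP [k5 Hk5].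
rewrite /phi /A4 /A5 /= g1 f2 f3 C2_0.
have -> : f 4%N + f 5%N + 0 = (k4 + f 5%N) * 2 by rewrite mulrDl -Hk4; ring.
have -> : f 5%N + f 7%N + 0 * f 5%N = (f 7%N + k5) * 2 by rewrite mulrDl -Hk5; ring.
rewrite !Z2_even; congr (_, _, _, _, _); rewrite /= ?expr0n /=; ring.
Qed.

Definition fsur (b c : int) (d e : 'Z_2) : series := fun k =>
  if k == 1%N then 1 else if k == 2%N then b else if k == 3%N then c + b ^+ 2
  else if k == 4%N then ((d : nat)%:Z - C2 (c + b ^+ 2)) else if k == 7%N then (e : nat)%:Z else 0.

Lemma phi_sur v : exists x, isSR x /\ phi x = v.
Proof.
case: v => [[[[a b] c] d] e].
exists (g1s a, fsur b c d e); split; first by [].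
rewrite /phi /A4 /A5 /fsur /g1s /=.
congr (_, _, _, _, _).
- ring.
- by rewrite addr0 subrK -pmulrn natr_Zp.
- by rewrite mulr0 addr0 add0r -pmulrn natr_Zp.
Qed.

Theorem corollary4 :
  (forall g f : series, isSR (g, f) ->
     (in_top_commutator (g, f) <->
        [/\ g 1%N = 0, f 2%N = 0, f 3%N = 0,
            (f 4%N == f 5%N %[mod 2])%Z & (f 5%N == f 7%N %[mod 2])%Z]))
  /\
  (exists phi : riordan -> (int * int * int * 'Z_2 * 'Z_2)%type,
     (forall x y, isSR x -> isSR y -> phi (rmul x y) = phi x + phi y) /\
     (forall v, exists x, isSR x /\ phi x = v) /\
     (forall x, isSR x -> (phi x = 0 <-> in_top_commutator x))).
Proof.
split.
- move=> g f HSR; split.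
  + move=> Htop; have H0 := top_phi HSR Htop.
    by have [H1 _] := phi_cond HSR; apply: H1.
  + move=> Hc; apply: (phi_top HSR).
    by have [_ H2] := phi_cond HSR; apply: H2.
- exists phi; split; first by move=> x y Hx Hy; exact: phi_hom.
  split; first exact: phi_sur.
  by move=> x Hx; split; [exact: phi_top Hx | exact: top_phi Hx].
Qed.
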